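(* Let $n$ be a positive integer, let $\mathbf{A}$ be an infinite $n$-generated subdirectly irreducible bi-Heyting algebra validating $LFC$, let $\mathfrak{X}=\mathbf{A}_*$ with greatest element $r$, and let $m$ be a minimal element of $\mathfrak{X}$ with $X=\{x:m<x\}\uplus min(\mathfrak{X})$ and such that every minimal $y\ne m$ has a unique immediate successor lying strictly above $m$. Write $\Downarrow x$ for the set of immediate predecessors of $x$, and $\uparrow m=\{x: m\le x\}$. Then: (i) if $x$ is an up limit, then $2\le|\Downarrow x|\le 2^n$; (ii) $\mathfrak{X}$ has no down limits; (iii) $\uparrow m$ is an infinite well-order; (iv) if $x$ is an immediate successor of $m$, then $|\Downarrow x|\le 2$; (v) if $m<x$, $x$ is not an immediate successor of $m$ and $x$ is not an up limit, then $x$ has exactly one immediate predecessor $z$ with $m<z$ and exactly one immediate predecessor $z$ with $m\not<z$.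
   Context: Bi-Heyting algebras are bounded distributive lattices with residuated $\to$ and $\leftarrow$. $\mathbf{A}_*$ is the bi-Esakia dual of $\mathbf{A}$: prime filters ordered by inclusion with the Priestley topology. For SI $\mathbf{A}$ validating $\mathsf{bi\text{-}LC}$ (bi-intuitionistic logic plus $(p\to q)\vee(q\to p)$), $\mathbf{A}_*$ is a bi-Esakia co-tree: it has a greatest element and principal upsets are chains. $LFC=\mathsf{bi\text{-}LC}+\beta(\mathfrak{F}_0)+\mathcal{J}(\mathfrak{F}_1)+\mathcal{J}(\mathfrak{F}_2)+\mathcal{J}(\mathfrak{F}_3)$. For a finite co-tree $\mathfrak{Y}$: - $\mathfrak{X}\not\models\beta(\mathfrak{Y})$ iff $\mathfrak{Y}$ order-embeds into $\mathfrak{X}$; - $\mathfrak{X}\not\models\mathcal{J}(\mathfrak{Y})$ iff there is a continuous surjective bi-p-morphism onto $\mathfrak{Y}$. The co-trees are: - $\mathfrak{F}_0$: $d<b<a$, $e<c<a$; - $\mathfrak{F}_1$: the chain $c<b<a$; - $\mathfrak{F}_2$: the chain $d<c<b<a$ plus $a'<a$, with $a'$ incomparable to $b,c,d$; - $\mathfrak{F}_3$: a top over three incomparable minimal points. A point $x$ with $m<x$ is an up limit if $x$ has no immediate predecessor in $\uparrow m$. A point $x\in\uparrow m\setminus\{r\}$ is a down limit if $x$ has no immediate successor. *)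

(* Defs.v *)
From Stdlib Require Import List Arith.
Import ListNotations.

Record biHeyting := BiHeyting {
  car :> Type;
  bot : car;
  top : car;
  meet : car -> car -> car;
  join : car -> car -> car;
  imp : car -> car -> car;
  coimp : car -> car -> car;
  meetC : forall a b, meet a b = meet b a;
  joinC : forall a b, join a b = join b a;
  meetA : forall a b c, meet a (meet b c) = meet (meet a b) c;
  joinA : forall a b c, join a (join b c) = join (join a b) c;
  meet_join_abs : forall a b, meet a (join a b) = a;
  join_meet_abs : forall a b, join a (meet a b) = a;
  distr : forall a b c, meet a (join b c) = join (meet a b) (meet a c);
  bot_least : forall a, meet bot a = bot;
  top_greatest : forall a, meet top a = a;
  imp_res : forall a b c,
    meet (meet c a) b = meet c a <-> meet c (imp a b) = c;
  coimp_res : forall a b c,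
    meet (coimp a b) c = coimp a b <-> meet a (join b c) = a
}.
Arguments bot {b0}. Arguments top {b0}.
Arguments meet {b0} _ _. Arguments join {b0} _ _.
Arguments imp {b0} _ _. Arguments coimp {b0} _ _.

Definition leA {A : biHeyting} (a b : A) : Prop := meet a b = a.

Definition congruence {A : biHeyting} (th : A -> A -> Prop) : Prop :=
  (forall a, th a a) /\ (forall a b, th a b -> th b a) /\
  (forall a b c, th a b -> th b c -> th a c) /\
  (forall a b c d, th a b -> th c d ->
     th (meet a c) (meet b d) /\ th (join a c) (join b d) /\
     th (imp a c) (imp b d) /\ th (coimp a c) (coimp b d)).

Definition nonidentity {A : biHeyting} (th : A -> A -> Prop) : Prop :=
  exists a b, a <> b /\ th a b.

Definition subdirectly_irreducible (A : biHeyting) : Prop :=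
  exists mu : A -> A -> Prop, congruence mu /\ nonidentity mu /\
    forall th, congruence th -> nonidentity th -> forall a b, mu a b -> th a b.

Definition subalg_closed {A : biHeyting} (S : A -> Prop) : Prop :=
  S bot /\ S top /\
  (forall a b, S a -> S b ->
     S (meet a b) /\ S (join a b) /\ S (imp a b) /\ S (coimp a b)).

Definition generated_by {A : biHeyting} (gens : list A) : Prop :=
  forall S : A -> Prop, subalg_closed S -> (forall g, In g gens -> S g) ->
  forall a, S a.

Definition n_generated (n : nat) (A : biHeyting) : Prop :=
  exists gens : list A, length gens = n /\ generated_by gens.

Definition finite_set {T : Type} (S : T -> Prop) : Prop :=
  exists l : list T, forall x, S x -> In x l.
Definition at_most {T : Type} (k : nat) (S : T -> Prop) : Prop :=
  exists l : list T, length l <= k /\ forall x, S x -> In x l.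
Definition at_least_two {T : Type} (S : T -> Prop) : Prop :=
  exists x y, x <> y /\ S x /\ S y.

Definition infinite_alg (A : biHeyting) : Prop := ~ finite_set (fun _ : A => True).

Definition prime_filter {A : biHeyting} (F : A -> Prop) : Prop :=
  F top /\ ~ F bot /\
  (forall a b, leA a b -> F a -> F b) /\
  (forall a b, F a -> F b -> F (meet a b)) /\
  (forall a b, F (join a b) -> F a \/ F b).

Definition pt (A : biHeyting) : Type := {F : A -> Prop | prime_filter F}.

Definition ptle {A : biHeyting} (P Q : pt A) : Prop :=
  forall a, proj1_sig P a -> proj1_sig Q a.
Definition ptlt {A : biHeyting} (P Q : pt A) : Prop := ptle P Q /\ P <> Q.

(* Priestley topology: subbasis phi(a) = {P | a in P} and their complements.
   A basic open set is a finite intersection of subbasic sets, coded by a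
   list of pairs (a, true) for phi(a), (a, false) for its complement. *)
Definition basic {A : biHeyting} (l : list (A * bool)) (P : pt A) : Prop :=
  forall ab, In ab l ->
    (snd ab = true -> proj1_sig P (fst ab)) /\
    (snd ab = false -> ~ proj1_sig P (fst ab)).

Definition open_set {A : biHeyting} (U : pt A -> Prop) : Prop :=
  forall P, U P -> exists l, basic l P /\ forall Q, basic l Q -> U Q.

Definition order_embeds {A : biHeyting} {Y : Type} (leY : Y -> Y -> Prop)
  (f : Y -> pt A) : Prop :=
  forall y y', leY y y' <-> ptle (f y) (f y').

Definition bi_p_morphism {A : biHeyting} {Y : Type} (leY : Y -> Y -> Prop)
  (f : pt A -> Y) : Prop :=
  (forall x x', ptle x x' -> leY (f x) (f x')) /\
  (forall x y, leY (f x) y -> exists x', ptle x x' /\ f x' = y) /\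
  (forall x y, leY y (f x) -> exists x', ptle x' x /\ f x' = y).

(* continuity w.r.t. the discrete topology on the finite co-tree Y *)
Definition continuous_to {A : biHeyting} {Y : Type} (f : pt A -> Y) : Prop :=
  forall S : Y -> Prop, open_set (fun P => S (f P)).

Definition surjective {X Y : Type} (f : X -> Y) : Prop := forall y, exists x, f x = y.

Definition maps_onto {A : biHeyting} {Y : Type} (leY : Y -> Y -> Prop) : Prop :=
  exists f : pt A -> Y, continuous_to f /\ surjective f /\ bi_p_morphism leY f.

Inductive F0 := F0a | F0b | F0c | F0d | F0e.
Definition F0lt (x y : F0) : Prop :=
  match x, y with
  | F0b, F0a | F0c, F0a | F0d, F0b | F0d, F0a | F0e, F0c | F0e, F0a => True
  | _, _ => False end.
Definition F0le (x y : F0) : Prop := x = y \/ F0lt x y.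

Inductive F1 := F1a | F1b | F1c.
Definition F1lt (x y : F1) : Prop :=
  match x, y with
  | F1b, F1a | F1c, F1a | F1c, F1b => True
  | _, _ => False end.
Definition F1le (x y : F1) : Prop := x = y \/ F1lt x y.

Inductive F2 := F2a | F2b | F2c | F2d | F2a'.
Definition F2lt (x y : F2) : Prop :=
  match x, y with
  | F2b, F2a | F2c, F2a | F2d, F2a | F2c, F2b | F2d, F2b | F2d, F2c
  | F2a', F2a => True
  | _, _ => False end.
Definition F2le (x y : F2) : Prop := x = y \/ F2lt x y.

Inductive F3 := F3t | F3u1 | F3u2 | F3u3.
Definition F3lt (x y : F3) : Prop :=
  match x, y with
  | F3u1, F3t | F3u2, F3t | F3u3, F3t => True
  | _, _ => False end.
Definition F3le (x y : F3) : Prop := x = y \/ F3lt x y.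

Definition validates_biLC (A : biHeyting) : Prop :=
  forall a b : A, join (imp a b) (imp b a) = top.

Definition validates_LFC (A : biHeyting) : Prop :=
  validates_biLC A /\
  (* A |= beta(F0)  iff  F0 does not order-embed into A_* *)
  ~ (exists f : F0 -> pt A, order_embeds F0le f) /\
  (* A |= J(Fi)  iff  no continuous surjective bi-p-morphism A_* -> Fi *)
  ~ maps_onto (A := A) F1le /\
  ~ maps_onto (A := A) F2le /\
  ~ maps_onto (A := A) F3le.

Definition minimal_pt {A : biHeyting} (x : pt A) : Prop :=
  forall y, ptle y x -> y = x.
Definition greatest_pt {A : biHeyting} (r : pt A) : Prop :=
  forall x, ptle x r.
Definition immpred {A : biHeyting} (z x : pt A) : Prop :=
  ptlt z x /\ ~ (exists w, ptlt z w /\ ptlt w x).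

Definition up_limit {A : biHeyting} (m x : pt A) : Prop :=
  ptlt m x /\ ~ (exists z, ptle m z /\ immpred z x).

Definition down_limit {A : biHeyting} (m r x : pt A) : Prop :=
  ptle m x /\ x <> r /\ ~ (exists z, immpred x z).

Definition infinite_well_order_up {A : biHeyting} (m : pt A) : Prop :=
  (forall x y, ptle m x -> ptle m y -> ptle x y \/ ptle y x) /\
  (forall S : pt A -> Prop, (forall x, S x -> ptle m x) -> (exists x, S x) ->
     exists x, S x /\ forall y, S y -> ptle x y) /\
  ~ finite_set (fun x => ptle m x).

(* Main.v *)
Require Import Defs.
From Stdlib Require Import List Arith.
From Stdlib Require Import Lia Classical ClassicalEpsilon FunctionalExtensionality PropExtensionality ProofIrrelevance.
Import ListNotations.

Section Lat.
Context {A : biHeyting}.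
Implicit Types a b c d : A.

Lemma meet_idem a : meet a a = a.
Proof.
  pose proof (meet_join_abs A a (meet a a)) as H.
  rewrite (join_meet_abs A a a) in H. exact H.
Qed.
Lemma le_refl a : leA a a.
Proof. apply meet_idem. Qed.
Lemma le_trans a b c : leA a b -> leA b c -> leA a c.
Proof. unfold leA; intros H1 H2. rewrite <- H1, <- meetA, H2. reflexivity. Qed.
Lemma le_antisym a b : leA a b -> leA b a -> a = b.
Proof. unfold leA; intros H1 H2. rewrite <- H1, meetC. exact H2. Qed.
Lemma meet_le_l a b : leA (meet a b) a.
Proof. unfold leA. rewrite (meetC A (meet a b) a), meetA, meet_idem. reflexivity. Qed.
Lemma meet_le_r a b : leA (meet a b) b.
Proof. unfold leA. rewrite <- meetA, meet_idem. reflexivity. Qed.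
Lemma le_meet a b c : leA c a -> leA c b -> leA c (meet a b).
Proof. unfold leA; intros H1 H2. rewrite meetA, H1, H2. reflexivity. Qed.
Lemma join_le_l a b : leA a (join a b).
Proof. unfold leA. apply meet_join_abs. Qed.
Lemma join_le_r a b : leA b (join a b).
Proof. rewrite joinC. apply join_le_l. Qed.
Lemma join_lub a b c : leA a c -> leA b c -> leA (join a b) c.
Proof.
  unfold leA; intros H1 H2. rewrite meetC, distr.
  rewrite (meetC A c a), (meetC A c b), H1, H2. reflexivity.
Qed.
Lemma le_top a : leA a top.
Proof. unfold leA. rewrite meetC. apply top_greatest. Qed.
Lemma bot_le a : leA bot a.
Proof. unfold leA. apply bot_least. Qed.
Lemma meet_mono a b c d : leA a b -> leA c d -> leA (meet a c) (meet b d).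
Proof.
  intros H1 H2. apply le_meet.
  - eapply le_trans; [apply meet_le_l|exact H1].
  - eapply le_trans; [apply meet_le_r|exact H2].
Qed.
Lemma mp_le a b : leA (meet a (imp a b)) b.
Proof.
  pose proof (proj2 (imp_res A a b (imp a b)) (meet_idem _)) as H.
  unfold leA. rewrite (meetC A a (imp a b)). exact H.
Qed.
Lemma imp_intro a b c : leA (meet c a) b -> leA c (imp a b).
Proof. unfold leA; intros H. apply (proj1 (imp_res A a b c)). exact H. Qed.
Lemma coimp_le a b : leA a (join b (coimp a b)).
Proof. unfold leA. apply (proj1 (coimp_res A a b (coimp a b))). apply meet_idem. Qed.
Lemma coimp_elim a b c : leA a (join b c) -> leA (coimp a b) c.
Proof. unfold leA; intros H. apply (proj2 (coimp_res A a b c)). exact H. Qed.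
Lemma distr_le g a b : leA g (join a b) -> leA g (join (meet g a) (meet g b)).
Proof. unfold leA; intros H. rewrite <- distr, H, meet_idem. reflexivity. Qed.
End Lat.

Notation mem P a := (proj1_sig P a).

Section Pts.
Context {A : biHeyting}.
Implicit Types a b c : A.
Implicit Types P Q : pt A.

Lemma pt_ext P Q : (forall a, mem P a <-> mem Q a) -> P = Q.
Proof.
  destruct P as [F HF], Q as [G HG]; simpl; intros H.
  assert (F = G) by (apply functional_extensionality; intro a; apply propositional_extensionality; apply H).
  subst G. f_equal. apply proof_irrelevance.
Qed.
Lemma mem_top P : mem P top.
Proof. destruct P as [F HF]; exact (proj1 HF). Qed.
Lemma mem_bot P : ~ mem P bot.
Proof. destruct P as [F HF]; exact (proj1 (proj2 HF)). Qed.
Lemma mem_up P a b : leA a b -> mem P a -> mem P b.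
Proof. destruct P as [F HF]; exact (proj1 (proj2 (proj2 HF)) a b). Qed.
Lemma mem_meet P a b : mem P (meet a b) <-> mem P a /\ mem P b.
Proof.
  split.
  - intro H; split; [eapply mem_up; [apply meet_le_l|exact H]|eapply mem_up; [apply meet_le_r|exact H]].
  - destruct P as [F HF]; simpl; intros [H1 H2]. exact (proj1 (proj2 (proj2 (proj2 HF))) a b H1 H2).
Qed.
Lemma mem_join P a b : mem P (join a b) <-> mem P a \/ mem P b.
Proof.
  split.
  - destruct P as [F HF]; exact (proj2 (proj2 (proj2 (proj2 HF))) a b).
  - intros [H|H]; [eapply mem_up; [apply join_le_l|exact H]|eapply mem_up; [apply join_le_r|exact H]].
Qed.
Lemma mem_mp P a b : mem P (imp a b) -> mem P a -> mem P b.
Proof. intros H1 H2. apply (mem_up P (meet a (imp a b)) b (mp_le a b)). apply mem_meet; split; auto. Qed.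
Lemma imp_easy P Q a b : mem P (imp a b) -> ptle P Q -> mem Q a -> mem Q b.
Proof. intros H1 H2 H3. eapply mem_mp; eauto. Qed.
Lemma coimp_easy P Q a b : ptle Q P -> mem Q a -> ~ mem Q b -> mem P (coimp a b).
Proof.
  intros H1 H2 H3. apply H1.
  assert (mem Q (join b (coimp a b))) by (apply (mem_up Q a _ (coimp_le a b)); auto).
  apply mem_join in H. destruct H; tauto.
Qed.
Lemma ptle_refl P : ptle P P. Proof. intros a H; exact H. Qed.
Lemma ptle_trans P Q R : ptle P Q -> ptle Q R -> ptle P R.
Proof. unfold ptle; auto. Qed.
Lemma ptle_antisym P Q : ptle P Q -> ptle Q P -> P = Q.
Proof. intros; apply pt_ext; split; auto. Qed.
End Pts.

Section PFT.
Context {A : biHeyting} (gens : list A) (Hgen : generated_by gens).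

Definition combos (l : list A) : list A :=
  flat_map (fun a => flat_map (fun b => [meet a b; join a b; imp a b; coimp a b]) l) l.
Fixpoint lv (d : nat) : list A :=
  match d with 0 => bot :: top :: gens | S d' => lv d' ++ combos (lv d') end.
Definition enum (k : nat) : A := nth k (lv k) bot.

Lemma lv_prefix d1 d2 : d1 <= d2 -> exists t, lv d2 = lv d1 ++ t.
Proof.
  induction 1.
  - exists []; rewrite app_nil_r; auto.
  - destruct IHle as [t Ht]. exists (t ++ combos (lv m)). simpl. rewrite Ht, app_assoc. auto.
Qed.
Lemma lv_len d : d < length (lv d).
Proof.
  induction d; simpl; [lia|].
  rewrite length_app.
  assert (0 < length (combos (lv d))).
  { destruct (lv d) as [|a l] eqn:E; simpl in *; [lia|]. unfold combos. simpl. lia. }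
  lia.
Qed.
Lemma lv_in_mono a d1 d2 : d1 <= d2 -> In a (lv d1) -> In a (lv d2).
Proof. intros H1 H2. destruct (lv_prefix _ _ H1) as [t ->]. apply in_or_app; auto. Qed.
Lemma lv_all a : exists d, In a (lv d).
Proof.
  apply (Hgen (fun a => exists d, In a (lv d))).
  - split; [exists 0; simpl; auto|]. split; [exists 0; simpl; auto|].
    intros x y [d1 H1] [d2 H2].
    assert (Hx : In x (lv (max d1 d2))) by (eapply lv_in_mono; [|eauto]; lia).
    assert (Hy : In y (lv (max d1 d2))) by (eapply lv_in_mono; [|eauto]; lia).
    assert (K : forall z, In z [meet x y; join x y; imp x y; coimp x y] -> exists d, In z (lv d)).
    { intros z Hz. exists (S (max d1 d2)). simpl. apply in_or_app. right.
      unfold combos. apply in_flat_map. exists x. split; auto.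
      apply in_flat_map. exists y. split; auto. }
    repeat split; apply K; simpl; auto.
  - intros g Hg. exists 0. simpl; auto.
Qed.
Lemma enum_surj a : exists k, enum k = a.
Proof.
  destruct (lv_all a) as [d Hd].
  destruct (In_nth _ _ bot Hd) as [i [Hi Hn]].
  exists i. unfold enum.
  destruct (le_lt_dec d i) as [Hdi|Hid].
  - destruct (lv_prefix _ _ Hdi) as [t ->]. rewrite app_nth1; auto.
  - assert (i <= d) by lia. destruct (lv_prefix _ _ H) as [t Ht].
    rewrite Ht in Hn. rewrite app_nth1 in Hn; auto. apply lv_len.
Qed.

Definition is_filter (F : A -> Prop) :=
  F top /\ (forall a b, leA a b -> F a -> F b) /\ (forall a b, F a -> F b -> F (meet a b)).
Definition is_ideal (I : A -> Prop) :=
  I bot /\ (forall a b, leA a b -> I b -> I a) /\ (forall a b, I a -> I b -> I (join a b)).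

Definition genF (G : A -> Prop) (e : A) : A -> Prop :=
  fun z => exists f, G f /\ leA (meet f e) z.

Fixpoint chF (F I : A -> Prop) (k : nat) : A -> Prop :=
  match k with
  | 0 => F
  | S k' => let G := chF F I k' in
            if excluded_middle_informative (forall z, genF G (enum k') z -> ~ I z)
            then genF G (enum k') else G
  end.

Lemma genF_filter G e : is_filter G -> is_filter (genF G e).
Proof.
  intros [H1 [H2 H3]]. split; [|split].
  - exists top. split; auto. apply le_top.
  - intros a b Hab [f [Hf Hle]]. exists f; split; auto. eapply le_trans; eauto.
  - intros a b [f [Hf Hf']] [g [Hg Hg']]. exists (meet f g). split; auto.
    apply le_meet.
    + eapply le_trans; [|exact Hf']. apply meet_mono; [apply meet_le_l|apply le_refl].
    + eapply le_trans; [|exact Hg']. apply meet_mono; [apply meet_le_r|apply le_refl].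
Qed.
Lemma genF_incl G e : is_filter G -> forall z, G z -> genF G e z.
Proof. intros HG z Hz. exists z. split; auto. apply meet_le_l. Qed.

Lemma PFT (F I : A -> Prop) : is_filter F -> is_ideal I -> (forall a, F a -> ~ I a) ->
  exists P : pt A, (forall a, F a -> mem P a) /\ (forall a, I a -> ~ mem P a).
Proof.
  intros HF HI Hdis.
  assert (Hinv : forall k, is_filter (chF F I k) /\ (forall a, chF F I k a -> ~ I a)).
  { induction k; simpl; auto.
    destruct IHk as [IH1 IH2].
    destruct (excluded_middle_informative _) as [Hc|Hc]; auto.
    split; auto. apply genF_filter; auto. }
  assert (Hmono1 : forall k a, chF F I k a -> chF F I (S k) a).
  { intros k a H. simpl. destruct (excluded_middle_informative _); auto.
    apply genF_incl; auto. apply Hinv. }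
  assert (Hmono : forall k1 k2 a, k1 <= k2 -> chF F I k1 a -> chF F I k2 a).
  { intros k1 k2 a Hk. induction Hk; auto. }
  set (Qp := fun a => exists k, chF F I k a).
  assert (HQtop : Qp top) by (exists 0; apply HF).
  assert (HQup : forall a b, leA a b -> Qp a -> Qp b).
  { intros a b H [k Hk]. exists k. eapply (proj1 (proj2 (proj1 (Hinv k)))); eauto. }
  assert (HQmeet : forall a b, Qp a -> Qp b -> Qp (meet a b)).
  { intros a b [k1 H1] [k2 H2]. exists (max k1 k2).
    apply (proj2 (proj2 (proj1 (Hinv (max k1 k2))))).
    - apply (Hmono k1); [lia|auto].
    - apply (Hmono k2); [lia|auto]. }
  assert (HQdis : forall a, Qp a -> ~ I a).
  { intros a [k Hk]. eapply (proj2 (Hinv k)); eauto. }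
  assert (Hfail : forall a, ~ Qp a -> exists f, Qp f /\ I (meet f a)).
  { intros a Ha. destruct (enum_surj a) as [k Hk].
    destruct (excluded_middle_informative (forall z, genF (chF F I k) (enum k) z -> ~ I z)) as [Hc|Hc].
    - exfalso. apply Ha. exists (S k). simpl.
      destruct (excluded_middle_informative _) as [_|Hc']; [|contradiction].
      exists top. split; [apply Hinv|]. rewrite Hk. apply meet_le_r.
    - apply not_all_ex_not in Hc. destruct Hc as [z Hz].
      apply imply_to_and in Hz. destruct Hz as [[f [Hf Hle]] Hz].
      apply NNPP in Hz. exists f. split; [exists k; auto|].
      rewrite <- Hk. eapply (proj1 (proj2 HI)); eauto. }
  assert (Hpf : prime_filter Qp).
  { split; auto. split; [intro H; apply (HQdis bot); auto; apply HI|].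
    split; auto. split; auto.
    intros a b Hab. destruct (classic (Qp a)) as [Ha|Ha]; auto.
    destruct (classic (Qp b)) as [Hb|Hb]; auto. exfalso.
    destruct (Hfail a Ha) as [f [Hf HfI]]. destruct (Hfail b Hb) as [g [Hg HgI]].
    set (h := meet (meet f g) (join a b)).
    assert (Hh : Qp h) by (apply HQmeet; auto).
    apply (HQdis h Hh).
    assert (Hj : I (join (meet f a) (meet g b))) by (apply HI; auto).
    eapply (proj1 (proj2 HI)); [|exact Hj].
    eapply le_trans; [apply distr_le; apply meet_le_r|].
    apply join_lub.
    - eapply le_trans; [|apply join_le_l]. apply meet_mono; [|apply le_refl].
      eapply le_trans; [apply meet_le_l|apply meet_le_l].
    - eapply le_trans; [|apply join_le_r]. apply meet_mono; [|apply le_refl].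
      eapply le_trans; [apply meet_le_l|apply meet_le_r]. }
  exists (exist _ Qp Hpf). simpl. split.
  - intros a Ha. exists 0; auto.
  - intros a Ha HQ. eapply HQdis; eauto.
Qed.

Lemma imp_hard (P : pt A) a b : (forall Q : pt A, ptle P Q -> mem Q a -> mem Q b) -> mem P (imp a b).
Proof.
  intros H. apply NNPP; intro Hn.
  destruct (PFT (fun z => exists p, mem P p /\ leA (meet p a) z) (fun z => leA z b)) as [Q [HQ1 HQ2]].
  - split; [|split].
    + exists top. split; [apply mem_top|apply le_top].
    + intros x y Hxy [p [Hp Hle]]. exists p; split; auto. eapply le_trans; eauto.
    + intros x y [p [Hp Hp']] [q [Hq Hq']]. exists (meet p q). split; [apply mem_meet; split; auto|].
      apply le_meet.
      * eapply le_trans; [|exact Hp']. apply meet_mono; [apply meet_le_l|apply le_refl].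
      * eapply le_trans; [|exact Hq']. apply meet_mono; [apply meet_le_r|apply le_refl].
  - split; [apply bot_le|split].
    + intros x y Hxy Hy. eapply le_trans; eauto.
    + intros x y Hx Hy. apply join_lub; auto.
  - intros z [p [Hp Hle]] Hz. apply Hn. eapply mem_up; [|exact Hp].
    apply imp_intro. eapply le_trans; eauto.
  - apply (HQ2 b (le_refl b)). apply (H Q).
    + intros x Hx. apply HQ1. exists x. split; auto. apply meet_le_l.
    + apply HQ1. exists top. split; [apply mem_top|]. apply meet_le_r.
Qed.

Lemma coimp_hard (P : pt A) a b : mem P (coimp a b) -> exists Q : pt A, ptle Q P /\ mem Q a /\ ~ mem Q b.
Proof.
  intros H.
  destruct (PFT (fun z => leA a z) (fun z => exists c, ~ mem P c /\ leA z (join b c))) as [Q [HQ1 HQ2]].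
  - split; [apply le_top|split].
    + intros x y Hxy Hx. eapply le_trans; eauto.
    + intros x y Hx Hy. apply le_meet; auto.
  - split; [exists bot; split; [apply mem_bot|apply bot_le]|split].
    + intros x y Hxy [c [Hc Hle]]. exists c. split; auto. eapply le_trans; eauto.
    + intros x y [c [Hc Hc']] [d [Hd Hd']]. exists (join c d). split.
      * intro Hj. apply mem_join in Hj. tauto.
      * apply join_lub.
        -- eapply le_trans; [exact Hc'|]. apply join_lub; [apply join_le_l|].
           eapply le_trans; [|apply join_le_r]. apply join_le_l.
        -- eapply le_trans; [exact Hd'|]. apply join_lub; [apply join_le_l|].
           eapply le_trans; [|apply join_le_r]. apply join_le_r.
  - intros z Hz [c [Hc Hle]]. apply Hc. eapply mem_up; [|exact H].
    apply coimp_elim. eapply le_trans; eauto.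
  - exists Q. split; [|split].
    + intros x Hx. apply NNPP; intro Hn. apply (HQ2 x); auto.
      exists x. split; auto. apply join_le_r.
    + apply HQ1. apply le_refl.
    + intro Hb. apply (HQ2 b); auto. exists bot. split; [apply mem_bot|apply join_le_l].
Qed.

Lemma sep_pt a b : a <> b -> exists P : pt A, ~ (mem P a <-> mem P b).
Proof.
  intros Hab.
  assert (K : forall x y, ~ leA x y -> exists P : pt A, mem P x /\ ~ mem P y).
  { intros x y Hxy.
    destruct (PFT (fun z => leA x z) (fun z => leA z y)) as [Q [HQ1 HQ2]].
    - split; [apply le_top|split].
      + intros u v Huv Hu. eapply le_trans; eauto.
      + intros u v Hu Hv. apply le_meet; auto.
    - split; [apply bot_le|split].
      + intros u v Huv Hv. eapply le_trans; eauto.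
      + intros u v Hu Hv. apply join_lub; auto.
    - intros z H1 H2. apply Hxy. eapply le_trans; eauto.
    - exists Q. split; [apply HQ1, le_refl|apply HQ2, le_refl]. }
  destruct (classic (leA a b)) as [H1|H1].
  - destruct (classic (leA b a)) as [H2|H2].
    + exfalso; apply Hab, le_antisym; auto.
    + destruct (K _ _ H2) as [P [HP1 HP2]]. exists P. tauto.
  - destruct (K _ _ H1) as [P [HP1 HP2]]. exists P. tauto.
Qed.
End PFT.

Section Setting.
Context {A : biHeyting} (gens : list A) (Hgen : generated_by gens) (r m : pt A)
  (HLC : validates_biLC A) (Hr : greatest_pt r) (Hm : minimal_pt m)
  (Hcov : forall x, ptlt m x \/ minimal_pt x)
  (Hatt : forall y, minimal_pt y -> y <> m ->
     exists z, immpred y z /\ ptlt m z /\ forall w, immpred y w -> w = z).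

Implicit Types P Q R : pt A.
Implicit Types a b c : A.

Definition inC P := ptle m P.
Definition att y := minimal_pt y /\ y <> m.
Definition at_ y z := att y /\ immpred y z.
Definition prof_eq P Q := forall g, In g gens -> (mem P g <-> mem Q g).

Lemma imp_iff P a b : mem P (imp a b) <-> forall Q, ptle P Q -> mem Q a -> mem Q b.
Proof. split; [intros; eapply imp_easy; eauto|apply (imp_hard gens Hgen)]. Qed.
Lemma coimp_iff P a b : mem P (coimp a b) <-> exists Q, ptle Q P /\ mem Q a /\ ~ mem Q b.
Proof.
  split; [apply (coimp_hard gens Hgen)|intros [Q [H1 [H2 H3]]]; eapply coimp_easy; eauto].
Qed.

Lemma chain_base R P Q : ptle R P -> ptle R Q -> ptle P Q \/ ptle Q P.
Proof.
  intros HP HQ. destruct (classic (ptle P Q)) as [H|H]; auto. right.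
  intros b Hb. apply NNPP; intro Hb'.
  unfold ptle in H. apply not_all_ex_not in H. destruct H as [a Ha].
  apply imply_to_and in Ha. destruct Ha as [Ha Ha'].
  assert (Ht : mem R (join (imp a b) (imp b a))) by (rewrite (HLC a b); apply mem_top).
  apply mem_join in Ht. destruct Ht as [Ht|Ht].
  - apply Hb'. eapply mem_mp; [apply HP; exact Ht|exact Ha].
  - apply Ha'. eapply mem_mp; [apply HQ; exact Ht|exact Hb].
Qed.
Lemma chainC P Q : inC P -> inC Q -> ptle P Q \/ ptle Q P.
Proof. apply chain_base. Qed.
Lemma inC_up P Q : inC P -> ptle P Q -> inC Q.
Proof. unfold inC; intros; eapply ptle_trans; eauto. Qed.
Lemma notmin_inC P : ~ minimal_pt P -> inC P.
Proof. intros H. destruct (Hcov P) as [[H1 _]|H1]; [exact H1|contradiction]. Qed.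
Lemma att_notC y : att y -> ~ inC y.
Proof. intros [H1 H2] H. apply H2. symmetry. apply H1. exact H. Qed.
Lemma m_inC : inC m.
Proof. apply ptle_refl. Qed.
Lemma r_inC : inC r.
Proof. apply Hr. Qed.
Lemma C_or_att P : inC P \/ att P.
Proof.
  destruct (Hcov P) as [[H _]|H]; [left; exact H|].
  destruct (classic (P = m)) as [->|Hn]; [left; apply m_inC|right; split; auto].
Qed.
Lemma at_ex y : att y -> exists z, at_ y z.
Proof. intros [H1 H2]. destruct (Hatt y H1 H2) as [z [Hz _]]. exists z. split; [split|]; auto. Qed.
Lemma at_uniq y z z' : at_ y z -> at_ y z' -> z = z'.
Proof.
  intros [[H1 H2] H3] [_ H4]. destruct (Hatt y H1 H2) as [z0 [_ [_ Hu]]].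
  rewrite (Hu z H3), (Hu z' H4). auto.
Qed.
Lemma at_C y z : at_ y z -> inC z /\ z <> m.
Proof.
  intros [[H1 H2] H3]. destruct (Hatt y H1 H2) as [z0 [Hz0 [[Hmz Hmz'] Hu]]].
  rewrite (Hu z H3). split; auto.
Qed.
Lemma at_le y z : at_ y z -> ptle y z.
Proof. intros [_ [[H _] _]]. exact H. Qed.
Lemma at_att y z : at_ y z -> att y.
Proof. intros [H _]; exact H. Qed.
Lemma att_ne_C y P : att y -> inC P -> y <> P.
Proof. intros H1 H2 ->. eapply att_notC; eauto. Qed.

Lemma above_at y z Q : at_ y z -> ptle y Q -> Q = y \/ ptle z Q.
Proof.
  intros Hyz HyQ.
  destruct (chain_base y z Q (at_le _ _ Hyz) HyQ) as [H|H]; [right; exact H|].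
  destruct (classic (Q = z)) as [->|Hqz]; [right; apply ptle_refl|].
  destruct (classic (Q = y)) as [->|Hqy]; [left; auto|].
  exfalso. destruct Hyz as [_ [_ Hno]]. apply Hno. exists Q.
  split; split; auto.
Qed.

Lemma below_C Q P : ptle Q P -> inC P -> inC Q \/ (exists zQ, at_ Q zQ /\ ptle zQ P).
Proof.
  intros HQP HP. destruct (C_or_att Q) as [H|H]; [left; exact H|right].
  destruct (at_ex Q H) as [zQ HzQ]. exists zQ. split; auto.
  destruct (above_at Q zQ P HzQ HQP) as [E|E]; auto.
  subst P. exfalso. eapply att_notC; eauto.
Qed.

Lemma coimp_min P a b : minimal_pt P -> (mem P (coimp a b) <-> mem P a /\ ~ mem P b).
Proof.
  intros Hmin. rewrite coimp_iff. split.
  - intros [Q [H1 [H2 H3]]]. rewrite (Hmin Q H1) in *. auto.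
  - intros [H1 H2]. exists P. split; auto. apply ptle_refl.
Qed.

Lemma imp_at y z a b : at_ y z ->
  (mem y (imp a b) <-> (mem y a -> mem y b) /\ forall Q, ptle z Q -> mem Q a -> mem Q b).
Proof.
  intros Hyz. rewrite imp_iff. split.
  - intros H. split; [apply H, ptle_refl|]. intros Q HQ. apply H.
    eapply ptle_trans; [apply at_le; eauto|exact HQ].
  - intros [H1 H2] Q HQ. destruct (above_at y z Q Hyz HQ) as [->|H]; auto.
Qed.

Definition cut c := meet c (coimp top c).
Lemma cut_iff c P : ~ mem m c -> (mem P (cut c) <-> inC P /\ mem P c).
Proof.
  intros Hc. unfold cut. rewrite mem_meet. split.
  - intros [H1 H2]. split; auto. destruct (Hcov P) as [[H _]|H]; auto.
    apply coimp_min in H2; auto. tauto.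
  - intros [H1 H2]. split; auto. eapply coimp_easy; eauto. apply mem_top.
Qed.

Lemma ptlt_sep P Q : ptlt P Q -> exists c, mem Q c /\ ~ mem P c.
Proof.
  intros [H1 H2]. apply NNPP; intro H. apply H2. apply ptle_antisym; auto.
  intros c Hc. apply NNPP; intro Hc'. apply H; eauto.
Qed.
Lemma ptlt_le P Q : ptlt P Q -> ptle P Q.
Proof. intros [H _]; exact H. Qed.
Lemma ptlt_not_ge P Q : ptlt P Q -> ~ ptle Q P.
Proof. intros [H1 H2] H3. apply H2. apply ptle_antisym; auto. Qed.
Lemma C_lt_or_ge P Q : inC P -> inC Q -> ptlt P Q \/ ptle Q P.
Proof.
  intros HP HQ. destruct (chainC P Q HP HQ) as [H|H]; [|right; exact H].
  destruct (classic (P = Q)) as [->|Hn]; [right; apply ptle_refl|left; split; auto].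
Qed.

Lemma profile_at y y' z : at_ y z -> at_ y' z -> prof_eq y y' -> y = y'.
Proof.
  intros H1 H2 Hp. apply pt_ext.
  apply (Hgen (fun a => mem y a <-> mem y' a)).
  - split; [split; intros Hb; exfalso; exact (mem_bot _ Hb)|].
    split; [split; intros; apply mem_top|].
    intros a b Ha Hb. split; [|split; [|split]].
    + rewrite !mem_meet. tauto.
    + rewrite !mem_join. tauto.
    + rewrite (imp_at y z a b H1), (imp_at y' z a b H2). tauto.
    + rewrite (coimp_min y a b (proj1 (at_att _ _ H1))), (coimp_min y' a b (proj1 (at_att _ _ H2))). tauto.
  - exact Hp.
Qed.


Definition bmem P a : bool := if excluded_middle_informative (mem P a) then true else false.
Lemma bmem_true P a : bmem P a = true <-> mem P a.
Proof. unfold bmem. destruct (excluded_middle_informative _); split; intros; auto; discriminate. Qed.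
Lemma bmem_eq P Q a : (mem P a <-> mem Q a) -> bmem P a = bmem Q a.
Proof.
  intros H. unfold bmem. destruct (excluded_middle_informative (mem P a)), (excluded_middle_informative (mem Q a)); tauto.
Qed.
Definition pl P : list bool := map (fun g => bmem P g) gens.
Lemma pl_len P : length (pl P) = length gens.
Proof. unfold pl. apply length_map. Qed.
Lemma pl_prof P Q : pl P = pl Q -> prof_eq P Q.
Proof.
  unfold pl, prof_eq. intros H g Hg.
  assert (bmem P g = bmem Q g).
  { revert H Hg. generalize gens. intros l. induction l as [|g0 l IH]; intros H Hg; [destruct Hg|]. simpl in H. injection H as H1 H2.
    destruct Hg as [<-|Hg]; auto. }
  rewrite <- !bmem_true, H0. tauto.
Qed.
Lemma prof_pl P Q : prof_eq P Q -> pl P = pl Q.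
Proof.
  unfold pl, prof_eq. intros H. apply map_ext_in. intros g Hg. apply bmem_eq. auto.
Qed.

Fixpoint allbl (k : nat) : list (list bool) :=
  match k with 0 => [[]] | S k' => map (cons true) (allbl k') ++ map (cons false) (allbl k') end.
Lemma allbl_in l : In l (allbl (length l)).
Proof.
  induction l as [|b l IH]; simpl; auto.
  apply in_or_app. destruct b; [left|right]; apply in_map; auto.
Qed.
Lemma allbl_len k : length (allbl k) = Nat.pow 2 k.
Proof. induction k; simpl; auto. rewrite length_app, !length_map, IHk. lia. Qed.
Lemma pl_in P : In (pl P) (allbl (length gens)).
Proof. rewrite <- (pl_len P). apply allbl_in. Qed.

Lemma inter_pt (T : pt A -> Prop) w0 : T w0 ->
  (forall s s', T s -> T s' -> ptle s s' \/ ptle s' s) ->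
  exists P, forall a, mem P a <-> forall s, T s -> mem s a.
Proof.
  intros Hw0 Hch.
  set (F := fun a => forall s, T s -> mem s a).
  assert (Hpf : prime_filter F).
  { split; [intros s _; apply mem_top|]. split; [intros H; exact (mem_bot _ (H w0 Hw0))|].
    split; [intros a b Hab H s Hs; eapply mem_up; eauto|].
    split; [intros a b Ha Hb s Hs; apply mem_meet; split; auto|].
    intros a b Hab. apply NNPP; intro Hn. apply not_or_and in Hn. destruct Hn as [Ha Hb].
    unfold F in Ha, Hb. apply not_all_ex_not in Ha. destruct Ha as [s Hs].
    apply not_all_ex_not in Hb. destruct Hb as [s' Hs'].
    apply imply_to_and in Hs. apply imply_to_and in Hs'.
    destruct Hs as [Hs Hsa], Hs' as [Hs' Hsb].
    destruct (Hch s s' Hs Hs') as [H|H].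
    + pose proof (Hab s Hs) as K. apply mem_join in K. destruct K as [K|K]; auto.
    + pose proof (Hab s' Hs') as K. apply mem_join in K. destruct K as [K|K]; auto. }
  exists (exist _ F Hpf). simpl. tauto.
Qed.
Lemma union_pt (T : pt A -> Prop) w0 : T w0 ->
  (forall s s', T s -> T s' -> ptle s s' \/ ptle s' s) ->
  exists P, forall a, mem P a <-> exists s, T s /\ mem s a.
Proof.
  intros Hw0 Hch.
  set (F := fun a => exists s, T s /\ mem s a).
  assert (Hpf : prime_filter F).
  { split; [exists w0; split; auto; apply mem_top|].
    split; [intros [s [_ H]]; exact (mem_bot _ H)|].
    split; [intros a b Hab [s [Hs H]]; exists s; split; auto; eapply mem_up; eauto|].
    split.
    - intros a b [s [Hs Ha]] [s' [Hs' Hb]].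
      destruct (Hch s s' Hs Hs') as [H|H].
      + exists s'. split; auto. apply mem_meet; split; auto.
      + exists s. split; auto. apply mem_meet; split; auto.
    - intros a b [s [Hs H]]. apply mem_join in H. destruct H; [left|right]; exists s; auto. }
  exists (exist _ F Hpf). simpl. tauto.
Qed.

Section DownLimit.
Variable x : pt A.
Hypothesis HxC : inC x.
Hypothesis Hxr : x <> r.
Hypothesis Hno : ~ exists z, immpred x z.

Lemma dl_noleast w : ptlt x w -> exists w', ptlt x w' /\ ptlt w' w.
Proof.
  intros Hw. apply NNPP; intro H. apply Hno. exists w. split; auto.
Qed.
Lemma dl_xr : ptlt x r.
Proof. split; [apply Hr|auto]. Qed.
Lemma dl_inter a : ~ mem x a -> exists w, ptlt x w /\ ~ mem w a.
Proof.
  intros Ha. apply NNPP; intro H.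
  assert (H' : forall w, ptlt x w -> mem w a).
  { intros w Hw. apply NNPP; intro Hn. apply H. exists w; auto. }
  destruct (inter_pt (fun w => ptlt x w) r dl_xr) as [P HP].
  { intros s s' Hs Hs'. eapply chain_base; apply ptlt_le; eauto. }
  assert (HxP : ptle x P) by (intros b Hb; apply HP; intros s Hs; apply (ptlt_le _ _ Hs); auto).
  assert (HPa : mem P a) by (apply HP; auto).
  apply Hno. exists P. split; [split; auto; intros ->; auto|].
  intros [u [Hu1 Hu2]]. apply (ptlt_not_ge _ _ Hu2). intros b Hb. exact (proj1 (HP b) Hb u Hu1).
Qed.
Lemma dl_gens (l : list A) : exists z0, ptlt x z0 /\
  forall w, ptlt x w -> ptle w z0 -> forall g, In g l -> (mem w g <-> mem x g).
Proof.
  induction l as [|g l IH].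
  - exists r. split; [apply dl_xr|]. intros w _ _ g [].
  - destruct IH as [z0 [Hz0 IH]].
    destruct (classic (mem x g)) as [Hg|Hg].
    + exists z0. split; auto. intros w Hw Hwz g' [<-|Hg']; auto.
      split; auto. intros _. apply (ptlt_le _ _ Hw); auto.
    + destruct (dl_inter g Hg) as [wg [Hwg Hwg']].
      destruct (chain_base x z0 wg (ptlt_le _ _ Hz0) (ptlt_le _ _ Hwg)) as [H|H].
      * exists z0. split; auto. intros w Hw Hwz g' [<-|Hg']; auto.
        split; [intros K; exfalso; apply Hwg'; apply H; apply Hwz; auto|tauto].
      * exists wg. split; auto. intros w Hw Hwz g' [<-|Hg'].
        -- split; [intros K; exfalso; apply Hwg'; apply Hwz; auto|tauto].
        -- apply IH; auto. eapply ptle_trans; eauto.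
Qed.
Lemma dl_prof z0 : ptlt x z0 -> forall L : list (list bool), exists z1, ptlt x z1 /\ ptle z1 z0 /\
  forall pi, In pi L -> (exists y zy, at_ y zy /\ ptlt x zy /\ ptle zy z1 /\ pl y = pi) ->
    forall w, ptlt x w -> ptle w z1 -> exists y zy, at_ y zy /\ ptlt x zy /\ ptle zy w /\ pl y = pi.
Proof.
  intros Hz0 L. induction L as [|pi L IH].
  - exists z0. split; auto. split; [apply ptle_refl|]. intros pi [].
  - destruct IH as [z1 [Hz1 [Hz10 IH]]].
    destruct (classic (forall w, ptlt x w -> ptle w z1 ->
       exists y zy, at_ y zy /\ ptlt x zy /\ ptle zy w /\ pl y = pi)) as [Hrec|Hrec].
    + exists z1. split; auto. split; auto. intros pi' [<-|Hpi']; auto.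
    + apply not_all_ex_not in Hrec. destruct Hrec as [wp Hwp].
      apply imply_to_and in Hwp. destruct Hwp as [Hwp1 Hwp].
      apply imply_to_and in Hwp. destruct Hwp as [Hwp2 Hwp].
      exists wp. split; auto. split; [eapply ptle_trans; eauto|].
      intros pi' [<-|Hpi'].
      * intros [y [zy [H1 [H2 [H3 H4]]]]]. exfalso. apply Hwp. exists y, zy. auto.
      * intros [y [zy [H1 [H2 [H3 H4]]]]] w Hw Hww.
        apply IH; auto.
        -- exists y, zy. split; [exact H1|split; [exact H2|split; [eapply ptle_trans; eauto|exact H4]]].
        -- eapply ptle_trans; eauto.
Qed.

Lemma no_down_limit : False.
Proof.
  destruct (dl_gens gens) as [z0 [Hz0 Hg]].
  destruct (dl_prof z0 Hz0 (allbl (length gens))) as [z1 [Hz1 [Hz10 Hrec]]].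
  set (R := fun w => ptlt x w /\ ptle w z1).
  assert (HgR : forall w, R w -> forall g, In g gens -> (mem w g <-> mem x g)).
  { intros w [Hw1 Hw2] g Hgg. apply Hg; auto. eapply ptle_trans; eauto. }
  assert (HrecR : forall y zy, at_ y zy -> R zy -> forall w, R w ->
      exists y' zy', at_ y' zy' /\ R zy' /\ pl y' = pl y).
  { intros y zy Hy [Hzy1 Hzy2] w [Hw1 Hw2].
    destruct (Hrec (pl y) (pl_in y) (ex_intro _ y (ex_intro _ zy (conj Hy (conj Hzy1 (conj Hzy2 eq_refl))))) w Hw1 Hw2)
      as [y' [zy' [H1 [H2 [H3 H4]]]]].
    exists y', zy'. split; auto. split; auto. split; auto. eapply ptle_trans; eauto. }
  assert (HrecR' : forall y zy, at_ y zy -> R zy -> forall w, R w ->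
      exists y' zy', at_ y' zy' /\ R zy' /\ ptle zy' w /\ pl y' = pl y).
  { intros y zy Hy [Hzy1 Hzy2] w [Hw1 Hw2].
    destruct (Hrec (pl y) (pl_in y) (ex_intro _ y (ex_intro _ zy (conj Hy (conj Hzy1 (conj Hzy2 eq_refl))))) w Hw1 Hw2)
      as [y' [zy' [H1 [H2 [H3 H4]]]]].
    exists y', zy'. split; auto. split; [split; auto; eapply ptle_trans; eauto|]. auto. }
  clear HrecR.
  set (Inv := fun a => (forall w w', R w -> R w' -> (mem w a <-> mem w' a)) /\
     (forall y y' zy zy', at_ y zy -> at_ y' zy' -> R zy -> R zy' -> pl y = pl y' -> (mem y a <-> mem y' a))).
  assert (Htr : forall a b, (forall w w', R w -> R w' -> (mem w a <-> mem w' a)) ->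
     (forall w w', R w -> R w' -> (mem w b <-> mem w' b)) ->
     forall w w', R w -> R w' -> (forall Q, ptle w Q -> mem Q a -> mem Q b) ->
     (forall Q, ptle w' Q -> mem Q a -> mem Q b)).
  { intros a b Ha Hb w w' Hw Hw' H Q HQ HQa.
    assert (HQC : inC Q) by (eapply inC_up; [|exact HQ]; eapply inC_up; [exact HxC|apply ptlt_le, Hw']).
    destruct (classic (ptle Q z1)) as [Hq|Hq].
    - assert (RQ : R Q).
      { split; auto. destruct Hw' as [[Hw'1 Hw'2] _]. split; [eapply ptle_trans; eauto|].
        intros ->. apply Hw'2. apply ptle_antisym; auto. }
      apply (Hb w Q Hw RQ). apply H; [apply ptle_refl|]. apply (Ha w Q Hw RQ). auto.
    - apply H; auto. destruct (chainC w Q (inC_up _ _ HxC (ptlt_le _ _ (proj1 Hw))) HQC) as [K|K]; auto.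
      exfalso. apply Hq. eapply ptle_trans; [exact K|apply Hw]. }
  assert (Hcotr : forall a b, Inv a -> Inv b -> forall w w', R w -> R w' ->
     mem w (coimp a b) -> mem w' (coimp a b)).
  { intros a b [Ha1 Ha2] [Hb1 Hb2] w w' Hw Hw' H.
    apply coimp_iff in H. destruct H as [Q [HQw [HQa HQb]]]. apply coimp_iff.
    assert (HwC : inC w) by (eapply inC_up; [exact HxC|apply ptlt_le, Hw]).
    destruct (below_C Q w HQw HwC) as [HQC|[zQ [HzQ HzQw]]].
    - destruct (C_lt_or_ge x Q HxC HQC) as [K|K].
      + assert (RQ : R Q) by (split; auto; eapply ptle_trans; [exact HQw|apply Hw]).
        exists w'. split; [apply ptle_refl|]. rewrite <- (Ha1 Q w' RQ Hw'), <- (Hb1 Q w' RQ Hw'). auto.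
      + exists Q. split; auto. eapply ptle_trans; [exact K|apply ptlt_le, Hw'].
    - destruct (C_lt_or_ge x zQ HxC (proj1 (at_C _ _ HzQ))) as [K|K].
      + assert (RzQ : R zQ) by (split; auto; eapply ptle_trans; [exact HzQw|apply Hw]).
        destruct (HrecR' Q zQ HzQ RzQ w' Hw') as [y' [zy' [H1 [H2 [H3 H4]]]]].
        exists y'. split; [eapply ptle_trans; [apply at_le; eauto|exact H3]|].
        rewrite <- (Ha2 Q y' zQ zy' HzQ H1 RzQ H2 (eq_sym H4)), <- (Hb2 Q y' zQ zy' HzQ H1 RzQ H2 (eq_sym H4)). auto.
      + exists Q. split; auto. eapply ptle_trans; [apply at_le; eauto|].
        eapply ptle_trans; [exact K|apply ptlt_le, Hw']. }
  assert (HInv : forall a, Inv a).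
  { apply Hgen.
    - split.
      + split; [split; intros Hb; exfalso; exact (mem_bot _ Hb)|split; intros Hb; exfalso; exact (mem_bot _ Hb)].
      + split.
        * split; [split; intros; apply mem_top|split; intros; apply mem_top].
        * intros a b Ha Hb. split; [|split; [|split]].
          -- split; intros; rewrite !mem_meet; [rewrite (proj1 Ha w w'), (proj1 Hb w w')|rewrite (proj2 Ha y y' zy zy'), (proj2 Hb y y' zy zy')]; auto; tauto.
          -- split; intros; rewrite !mem_join; [rewrite (proj1 Ha w w'), (proj1 Hb w w')|rewrite (proj2 Ha y y' zy zy'), (proj2 Hb y y' zy zy')]; auto; tauto.
          -- split.
             ++ intros w w' Hw Hw'. rewrite !imp_iff. split.
                ** exact (Htr a b (proj1 Ha) (proj1 Hb) w w' Hw Hw').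
                ** exact (Htr a b (proj1 Ha) (proj1 Hb) w' w Hw' Hw).
             ++ intros y y' zy zy' Hy Hy' Hzy Hzy' Hp.
                rewrite (imp_at y zy a b Hy), (imp_at y' zy' a b Hy').
                rewrite (proj2 Ha y y' zy zy' Hy Hy' Hzy Hzy' Hp), (proj2 Hb y y' zy zy' Hy Hy' Hzy Hzy' Hp).
                split; intros [K1 K2]; split; auto.
                ** exact (Htr a b (proj1 Ha) (proj1 Hb) zy zy' Hzy Hzy' K2).
                ** exact (Htr a b (proj1 Ha) (proj1 Hb) zy' zy Hzy' Hzy K2).
          -- split.
             ++ intros w w' Hw Hw'. split; apply Hcotr; auto.
             ++ intros y y' zy zy' Hy Hy' Hzy Hzy' Hp.
                rewrite (coimp_min y a b (proj1 (at_att _ _ Hy))), (coimp_min y' a b (proj1 (at_att _ _ Hy'))).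
                rewrite (proj2 Ha y y' zy zy' Hy Hy' Hzy Hzy' Hp), (proj2 Hb y y' zy zy' Hy Hy' Hzy Hzy' Hp). tauto.
    - intros g Hgg. split.
      + intros w w' Hw Hw'. rewrite (HgR w Hw g Hgg), (HgR w' Hw' g Hgg). tauto.
      + intros y y' zy zy' _ _ _ _ Hp. apply pl_prof; auto. }
  destruct (dl_noleast z1 Hz1) as [w' [Hw'1 Hw'2]].
  assert (R1 : R z1) by (split; auto; apply ptle_refl).
  assert (R2 : R w') by (split; auto; apply ptlt_le; auto).
  apply (proj2 Hw'2). apply pt_ext. intros a. apply (proj1 (HInv a)); auto.
Qed.
End DownLimit.


Lemma wo_least (S : pt A -> Prop) : (forall x, S x -> ptle m x) -> (exists x, S x) ->
  exists x, S x /\ forall y, S y -> ptle x y.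
Proof.
  intros HS [s0 Hs0]. apply NNPP; intro Hnl.
  destruct (inter_pt S s0 Hs0) as [P HP].
  { intros s s' Hs Hs'. apply (chain_base m); auto. }
  assert (HPs : forall s, S s -> ptle P s) by (intros s Hs a Ha; apply (proj1 (HP a) Ha s Hs)).
  assert (HPS : ~ S P) by (intros H; apply Hnl; exists P; auto).
  assert (HPC : inC P) by (intros a Ha; apply HP; intros s Hs; apply HS; auto).
  apply (no_down_limit P HPC).
  - intros ->. apply HPS. replace r with s0; auto. apply ptle_antisym; [apply Hr|apply HPs; auto].
  - intros [z [[Hz1 Hz2] Hz3]].
    assert (Hex : exists s, S s /\ ~ ptle z s).
    { apply NNPP; intro H. apply Hz2. apply ptle_antisym; auto.
      intros a Ha. apply HP. intros s Hs. apply NNPP; intro Hn.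
      apply H. exists s. split; [exact Hs|intro K; apply Hn; apply K; exact Ha]. }
    destruct Hex as [s [Hs Hzs]].
    destruct (chainC s z (HS s Hs) (inC_up _ _ HPC Hz1)) as [K|K]; [|contradiction].
    apply Hz3. exists s. split.
    + split; [apply HPs; auto|intros E; subst; contradiction].
    + split; auto. intros E; subst; apply Hzs; apply ptle_refl.
Qed.

Lemma fin_of_inj {T : Type} (t0 : T) (f : T -> list bool) k :
  (forall t, length (f t) = k) -> (forall t t', f t = f t' -> t = t') ->
  finite_set (fun _ : T => True).
Proof.
  intros Hlen Hinj.
  set (pk := fun v : list bool =>
    match excluded_middle_informative (exists t, f t = v) with
    | left H => proj1_sig (constructive_indefinite_description _ H)
    | right _ => t0 end).
  exists (map pk (allbl k)). intros t _.
  apply in_map_iff. exists (f t). split.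
  - unfold pk. destruct (excluded_middle_informative _) as [H|H].
    + destruct (constructive_indefinite_description _ H) as [t' Ht']. simpl. apply Hinj; auto.
    + exfalso; apply H; exists t; auto.
  - rewrite <- (Hlen t). apply allbl_in.
Qed.

Lemma C_infinite : infinite_alg A -> ~ finite_set (fun x => ptle m x).
Proof.
  intros Hinf [lC HlC].
  set (pick := fun (z : pt A) (pi : list bool) =>
    match excluded_middle_informative (exists y, at_ y z /\ pl y = pi) with
    | left H => proj1_sig (constructive_indefinite_description _ H)
    | right _ => z end).
  set (lX := lC ++ flat_map (fun z => map (pick z) (allbl (length gens))) lC).
  assert (HX : forall P, In P lX).
  { intros P. unfold lX. apply in_or_app. destruct (C_or_att P) as [H|H]; [left; apply HlC; exact H|right].
    destruct (at_ex P H) as [z Hz]. apply in_flat_map. exists z. split; [apply HlC; apply (at_C _ _ Hz)|].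
    apply in_map_iff. exists (pl P). split; [|apply pl_in].
    unfold pick. destruct (excluded_middle_informative _) as [K|K].
    - destruct (constructive_indefinite_description _ K) as [y [Hy1 Hy2]]. simpl.
      apply (profile_at y P z Hy1 Hz). apply pl_prof; auto.
    - exfalso; apply K; exists P; auto. }
  apply Hinf.
  apply (fin_of_inj bot (fun a => map (fun P => bmem P a) lX) (length lX)).
  - intros; apply length_map.
  - intros a b Hab. apply NNPP; intro Hn. destruct (sep_pt gens Hgen a b Hn) as [P HP].
    apply HP. assert (bmem P a = bmem P b).
    { assert (K := HX P). revert Hab K. generalize lX. intros l. induction l as [|Q l IH]; intros Hab K; [destruct K|].
      simpl in Hab. injection Hab as H1 H2. destruct K as [<-|K]; auto. }
    rewrite <- !bmem_true, H. tauto.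
Qed.


Section UpLimit.
Variable x : pt A.
Hypothesis Hup : up_limit m x.

Definition B w := inC w /\ ptlt w x.
Lemma ul_xC : inC x.
Proof. apply ptlt_le, Hup. Qed.
Lemma ul_Bm : B m.
Proof. split; [apply m_inC|apply Hup]. Qed.
Lemma ul_nomax w : B w -> exists w', B w' /\ ptlt w w'.
Proof.
  intros Hw. apply NNPP; intro H. apply (proj2 Hup). exists w. split; [apply Hw|].
  split; [apply Hw|]. intros [u [Hu1 Hu2]]. apply H. exists u. split; auto.
  split; auto. eapply inC_up; [apply Hw|apply ptlt_le, Hu1].
Qed.
Lemma B_max w1 w2 : B w1 -> B w2 -> exists w, B w /\ ptle w1 w /\ ptle w2 w.
Proof.
  intros H1 H2. destruct (chainC w1 w2 (proj1 H1) (proj1 H2)) as [K|K].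
  - exists w2. split; auto. split; auto. apply ptle_refl.
  - exists w1. split; auto. split; auto. apply ptle_refl.
Qed.
Lemma ul_union a : mem x a -> exists w, B w /\ mem w a.
Proof.
  intros Ha. apply NNPP; intro Hn.
  destruct (union_pt B m ul_Bm) as [P HP].
  { intros s s' Hs Hs'. apply chainC; [apply Hs|apply Hs']. }
  assert (HPx : ptle P x).
  { intros b Hb. apply HP in Hb. destruct Hb as [s [Hs Hb]]. apply (ptlt_le _ _ (proj2 Hs)); auto. }
  assert (HPC : inC P) by (intros b Hb; apply HP; exists m; split; [apply ul_Bm|auto]).
  apply (proj2 Hup). exists P. split; auto. split.
  - split; auto. intros E. apply Hn. exists m. split; [apply ul_Bm|].
    rewrite E in HP. exfalso. apply Hn. apply HP in Ha. exact Ha.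
  - intros [u [Hu1 Hu2]]. apply (ptlt_not_ge _ _ Hu1).
    intros b Hb. apply HP. exists u. split; auto. split; auto.
    eapply inC_up; [exact HPC|apply ptlt_le, Hu1].
Qed.
Lemma ul_stab (l : list A) : exists w0, B w0 /\
  forall Q, B Q -> ptle w0 Q -> forall a, In a l -> (mem Q a <-> mem x a).
Proof.
  induction l as [|a l IH].
  - exists m. split; [apply ul_Bm|]. intros Q _ _ a [].
  - destruct IH as [w0 [Hw0 IH]].
    destruct (classic (mem x a)) as [Ha|Ha].
    + destruct (ul_union a Ha) as [wa [Hwa Hwa']].
      destruct (B_max w0 wa Hw0 Hwa) as [w [Hw [H1 H2]]].
      exists w. split; auto. intros Q HQ HwQ b [<-|Hb].
      * split; [intros K; apply (ptlt_le _ _ (proj2 HQ)); exact K|intros _; apply HwQ, H2; exact Hwa'].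
      * apply IH; auto. eapply ptle_trans; eauto.
    + exists w0. split; auto. intros Q HQ HwQ b [<-|Hb]; auto.
      split; [intros K; exfalso; apply Ha; apply (ptlt_le _ _ (proj2 HQ)); auto|tauto].
Qed.

Definition cof (pi : list bool) := forall w, B w -> exists y zy, at_ y zy /\ B zy /\ ptle w zy /\ pl y = pi.

Lemma ul_prof z0 : B z0 -> forall L : list (list bool), exists z1, B z1 /\ ptle z0 z1 /\
  forall pi, In pi L -> (exists y zy, at_ y zy /\ B zy /\ ptle z1 zy /\ pl y = pi) -> cof pi.
Proof.
  intros Hz0 L. induction L as [|pi L IH].
  - exists z0. split; auto. split; [apply ptle_refl|]. intros pi [].
  - destruct IH as [z1 [Hz1 [Hz01 IH]]].
    destruct (classic (cof pi)) as [Hc|Hc].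
    + exists z1. split; auto. split; auto. intros pi' [<-|Hpi']; auto.
    + unfold cof in Hc. apply not_all_ex_not in Hc. destruct Hc as [wp Hwp].
      apply imply_to_and in Hwp. destruct Hwp as [Hwp1 Hwp].
      destruct (B_max z1 wp Hz1 Hwp1) as [z [Hz [Hz1z Hwpz]]].
      exists z. split; auto. split; [eapply ptle_trans; eauto|].
      intros pi' [<-|Hpi'].
      * intros [y [zy [H1 [H2 [H3 H4]]]]]. exfalso. apply Hwp. exists y, zy.
        split; [exact H1|split; [exact H2|split; [eapply ptle_trans; eauto|exact H4]]].
      * intros [y [zy [H1 [H2 [H3 H4]]]]]. apply IH; auto. exists y, zy.
        split; [exact H1|split; [exact H2|split; [eapply ptle_trans; eauto|exact H4]]].
Qed.

Lemma up_core z2 : B z2 ->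
  (forall v g, B v -> ptle z2 v -> In g gens -> (mem v g <-> mem z2 g)) ->
  (forall y y' zy zy', at_ y zy -> at_ y' zy' -> B zy -> ptle z2 zy -> B zy' -> ptle z2 zy' -> pl y = pl y') ->
  ((forall y zy, at_ y zy -> B zy -> ptle z2 zy -> False) \/ (exists y, at_ y z2)) ->
  False.
Proof.
  intros Hz2 Hg Hpr HT.
  set (R := fun v => B v /\ ptle z2 v).
  set (Inv := fun a => (forall w w', R w -> R w' -> (mem w a <-> mem w' a)) /\
     (forall y y' zy zy', at_ y zy -> at_ y' zy' -> R zy -> R zy' -> (mem y a <-> mem y' a))).
  assert (Htr : forall a b, (forall w w', R w -> R w' -> (mem w a <-> mem w' a)) ->
     (forall w w', R w -> R w' -> (mem w b <-> mem w' b)) ->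
     forall w w', R w -> R w' -> (forall Q, ptle w Q -> mem Q a -> mem Q b) ->
     (forall Q, ptle w' Q -> mem Q a -> mem Q b)).
  { intros a b Ha Hb w w' Hw Hw' H Q HQ HQa.
    assert (HQC : inC Q) by (eapply inC_up; [apply Hw'|exact HQ]).
    destruct (C_lt_or_ge Q x HQC ul_xC) as [K|K].
    - assert (RQ : R Q) by (split; [split; auto|eapply ptle_trans; [apply Hw'|exact HQ]]).
      apply (Hb w Q Hw RQ). apply H; [apply ptle_refl|]. apply (Ha w Q Hw RQ). auto.
    - apply H; auto. eapply ptle_trans; [apply ptlt_le, (proj2 (proj1 Hw))|exact K]. }
  assert (Hcotr : forall a b, Inv a -> Inv b -> forall w w', R w -> R w' ->
     mem w (coimp a b) -> mem w' (coimp a b)).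
  { intros a b [Ha1 Ha2] [Hb1 Hb2] w w' Hw Hw' H.
    apply coimp_iff in H. destruct H as [Q [HQw [HQa HQb]]]. apply coimp_iff.
    destruct (below_C Q w HQw (proj1 (proj1 Hw))) as [HQC|[zQ [HzQ HzQw]]].
    - destruct (C_lt_or_ge Q z2 HQC (proj1 Hz2)) as [K|K].
      + exists Q. split; auto. eapply ptle_trans; [apply ptlt_le, K|apply Hw'].
      + assert (RQ : R Q).
        { split; auto. split; auto. destruct (C_lt_or_ge Q x HQC ul_xC) as [K'|K']; auto.
          exfalso. apply (ptlt_not_ge _ _ (proj2 (proj1 Hw))). eapply ptle_trans; eauto. }
        exists w'. split; [apply ptle_refl|]. rewrite <- (Ha1 Q w' RQ Hw'), <- (Hb1 Q w' RQ Hw'). auto.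
    - destruct (C_lt_or_ge zQ z2 (proj1 (at_C _ _ HzQ)) (proj1 Hz2)) as [K|K].
      + exists Q. split; auto. eapply ptle_trans; [apply at_le; eauto|].
        eapply ptle_trans; [apply ptlt_le, K|apply Hw'].
      + assert (RzQ : R zQ).
        { split; auto. split; [apply (at_C _ _ HzQ)|].
          destruct (C_lt_or_ge zQ x (proj1 (at_C _ _ HzQ)) ul_xC) as [K'|K']; auto.
          exfalso. apply (ptlt_not_ge _ _ (proj2 (proj1 Hw))). eapply ptle_trans; eauto. }
        destruct HT as [HT|[y0 Hy0]]; [exfalso; apply (HT Q zQ HzQ (proj1 RzQ) K)|].
        assert (Rz2 : R z2) by (split; auto; apply ptle_refl).
        exists y0. split; [eapply ptle_trans; [apply at_le; eauto|apply Hw']|].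
        rewrite (Ha2 y0 Q z2 zQ Hy0 HzQ Rz2 RzQ), (Hb2 y0 Q z2 zQ Hy0 HzQ Rz2 RzQ). auto. }
  assert (HInv : forall a, Inv a).
  { apply Hgen.
    - split.
      + split; [split; intros Hb; exfalso; exact (mem_bot _ Hb)|split; intros Hb; exfalso; exact (mem_bot _ Hb)].
      + split.
        * split; [split; intros; apply mem_top|split; intros; apply mem_top].
        * intros a b Ha Hb. split; [|split; [|split]].
          -- split; intros; rewrite !mem_meet; [rewrite (proj1 Ha w w'), (proj1 Hb w w')|rewrite (proj2 Ha y y' zy zy'), (proj2 Hb y y' zy zy')]; auto; tauto.
          -- split; intros; rewrite !mem_join; [rewrite (proj1 Ha w w'), (proj1 Hb w w')|rewrite (proj2 Ha y y' zy zy'), (proj2 Hb y y' zy zy')]; auto; tauto.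
          -- split.
             ++ intros w w' Hw Hw'. rewrite !imp_iff. split.
                ** exact (Htr a b (proj1 Ha) (proj1 Hb) w w' Hw Hw').
                ** exact (Htr a b (proj1 Ha) (proj1 Hb) w' w Hw' Hw).
             ++ intros y y' zy zy' Hy Hy' Hzy Hzy'.
                rewrite (imp_at y zy a b Hy), (imp_at y' zy' a b Hy').
                rewrite (proj2 Ha y y' zy zy' Hy Hy' Hzy Hzy'), (proj2 Hb y y' zy zy' Hy Hy' Hzy Hzy').
                split; intros [K1 K2]; split; auto.
                ** exact (Htr a b (proj1 Ha) (proj1 Hb) zy zy' Hzy Hzy' K2).
                ** exact (Htr a b (proj1 Ha) (proj1 Hb) zy' zy Hzy' Hzy K2).
          -- split.
             ++ intros w w' Hw Hw'. split; apply Hcotr; auto.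
             ++ intros y y' zy zy' Hy Hy' Hzy Hzy'.
                rewrite (coimp_min y a b (proj1 (at_att _ _ Hy))), (coimp_min y' a b (proj1 (at_att _ _ Hy'))).
                rewrite (proj2 Ha y y' zy zy' Hy Hy' Hzy Hzy'), (proj2 Hb y y' zy zy' Hy Hy' Hzy Hzy'). tauto.
    - intros g Hgg. split.
      + intros w w' Hw Hw'. rewrite (Hg w g (proj1 Hw) (proj2 Hw) Hgg), (Hg w' g (proj1 Hw') (proj2 Hw') Hgg). tauto.
      + intros y y' zy zy' Hy Hy' Hzy Hzy'. apply pl_prof; auto.
        apply (Hpr y y' zy zy' Hy Hy' (proj1 Hzy) (proj2 Hzy) (proj1 Hzy') (proj2 Hzy')). }
  destruct (ul_nomax z2 Hz2) as [w' [Hw'1 Hw'2]].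
  assert (R1 : R z2) by (split; auto; apply ptle_refl).
  assert (R2 : R w') by (split; auto; apply ptlt_le; auto).
  apply (proj2 Hw'2). apply pt_ext. intros a. apply (proj1 (HInv a)); auto.
Qed.

Lemma B_max3 w1 w2 w3 : B w1 -> B w2 -> B w3 -> exists w, B w /\ ptle w1 w /\ ptle w2 w /\ ptle w3 w.
Proof.
  intros H1 H2 H3. destruct (B_max w1 w2 H1 H2) as [u [Hu [K1 K2]]].
  destruct (B_max u w3 Hu H3) as [w [Hw [K3 K4]]]. exists w. split; auto.
  split; [eapply ptle_trans; eauto|split; [eapply ptle_trans; eauto|auto]].
Qed.

Lemma ul_lim pi : cof pi -> exists p, at_ p x /\ pl p = pi.
Proof.
  intros Hcof.
  set (EC := fun a => exists w0, B w0 /\ exists v : Prop, forall y zy, at_ y zy -> B zy -> ptle w0 zy -> pl y = pi -> (mem y a <-> v)).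
  destruct (Hcof m ul_Bm) as [y0 [zy0 [Hy0 [_ [_ Hpy0]]]]].
  assert (HEC : forall a, EC a).
  { apply Hgen.
    - split; [exists m; split; [apply ul_Bm|exists False]; intros; split; [apply mem_bot|intros []]|].
      split; [exists m; split; [apply ul_Bm|exists True]; intros; split; [auto|intros; apply mem_top]|].
      intros a b [wa [Hwa [va Ha]]] [wb [Hwb [vb Hb]]].
      destruct (ul_stab [a; b]) as [ws [Hws Hs]].
      destruct (B_max3 wa wb ws Hwa Hwb Hws) as [w [Hw [K1 [K2 K3]]]].
      split; [|split; [|split]].
      + exists w. split; auto. exists (va /\ vb). intros y zy Hy Hzy Hwz Hp.
        rewrite mem_meet, (Ha y zy), (Hb y zy); auto; try tauto; eapply ptle_trans; eauto.
      + exists w. split; auto. exists (va \/ vb). intros y zy Hy Hzy Hwz Hp.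
        rewrite mem_join, (Ha y zy), (Hb y zy); auto; try tauto; eapply ptle_trans; eauto.
      + exists w. split; auto.
        exists ((va -> vb) /\ (mem x a -> mem x b) /\ (forall Q, ptle x Q -> mem Q a -> mem Q b)).
        intros y zy Hy Hzy Hwz Hp.
        rewrite (imp_at y zy a b Hy), (Ha y zy), (Hb y zy); auto; try (eapply ptle_trans; eauto).
        assert (E : (forall Q, ptle zy Q -> mem Q a -> mem Q b) <->
           (mem x a -> mem x b) /\ (forall Q, ptle x Q -> mem Q a -> mem Q b)).
        { split.
          - intros H. split; [apply H, ptlt_le, Hzy|]. intros Q HQ. apply H.
            eapply ptle_trans; [apply ptlt_le, Hzy|exact HQ].
          - intros [H1 H2] Q HQ. assert (HQC : inC Q) by (eapply inC_up; [apply Hzy|exact HQ]).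
            destruct (C_lt_or_ge Q x HQC ul_xC) as [K|K]; [|apply H2; auto].
            assert (BQ : B Q) by (split; auto).
            assert (wQ : ptle ws Q) by (eapply ptle_trans; [exact K3|eapply ptle_trans; eauto]).
            rewrite (Hs Q BQ wQ a), (Hs Q BQ wQ b); simpl; auto. }
        rewrite E. tauto.
      + exists w. split; auto. exists (va /\ ~ vb). intros y zy Hy Hzy Hwz Hp.
        rewrite (coimp_min y a b (proj1 (at_att _ _ Hy))), (Ha y zy), (Hb y zy); auto; try tauto; eapply ptle_trans; eauto.
    - intros g Hgg. exists m. split; [apply ul_Bm|]. exists (mem y0 g).
      intros y zy Hy Hzy _ Hp. apply pl_prof; [congruence|auto]. }
  set (F := fun a => exists w0, B w0 /\ forall y zy, at_ y zy -> B zy -> ptle w0 zy -> pl y = pi -> mem y a).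
  assert (Hkey : forall a w0 v, B w0 -> (forall y zy, at_ y zy -> B zy -> ptle w0 zy -> pl y = pi -> (mem y a <-> v)) -> (F a <-> v)).
  { intros a w0 v Hw0 H. split.
    - intros [w1 [Hw1 H1]]. destruct (B_max w0 w1 Hw0 Hw1) as [w [Hw [K1 K2]]].
      destruct (Hcof w Hw) as [y [zy [Hy [Hzy [Hwz Hp]]]]].
      apply (H y zy); auto; [eapply ptle_trans; eauto|]. apply (H1 y zy); auto. eapply ptle_trans; eauto.
    - intros Hv. exists w0. split; auto. intros y zy Hy Hzy Hwz Hp. apply (H y zy); auto. }
  assert (HF : forall a, F a \/ ~ F a) by (intros; apply classic).
  assert (Hpf : prime_filter F).
  { split; [exists m; split; [apply ul_Bm|]; intros; apply mem_top|].
    split; [intros [w1 [Hw1 H1]]; destruct (Hcof w1 Hw1) as [y [zy [Hy [Hzy [Hwz Hp]]]]]; exact (mem_bot _ (H1 y zy Hy Hzy Hwz Hp))|].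
    split; [intros a b Hab [w1 [Hw1 H1]]; exists w1; split; auto; intros; eapply mem_up; eauto|].
    split.
    - intros a b [w1 [Hw1 H1]] [w2 [Hw2 H2]]. destruct (B_max w1 w2 Hw1 Hw2) as [w [Hw [K1 K2]]].
      exists w. split; auto. intros y zy Hy Hzy Hwz Hp. apply mem_meet. split.
      + apply (H1 y zy); auto. eapply ptle_trans; eauto.
      + apply (H2 y zy); auto. eapply ptle_trans; eauto.
    - intros a b Hab. destruct (HEC a) as [wa [Hwa [va Ha]]]. destruct (HEC b) as [wb [Hwb [vb Hb]]].
      rewrite (Hkey a wa va Hwa Ha), (Hkey b wb vb Hwb Hb).
      destruct Hab as [w1 [Hw1 H1]].
      destruct (B_max3 wa wb w1 Hwa Hwb Hw1) as [w [Hw [K1 [K2 K3]]]].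
      destruct (Hcof w Hw) as [y [zy [Hy [Hzy [Hwz Hp]]]]].
      assert (K : mem y (join a b)) by (apply (H1 y zy); auto; eapply ptle_trans; eauto).
      apply mem_join in K. destruct K as [K|K]; [left; apply (Ha y zy)|right; apply (Hb y zy)]; auto;
        eapply ptle_trans; eauto. }
  set (p := exist _ F Hpf : pt A).
  assert (Hpx : ptle p x).
  { intros a [w1 [Hw1 H1]]. destruct (Hcof w1 Hw1) as [y [zy [Hy [Hzy [Hwz Hp]]]]].
    apply (ptlt_le _ _ (proj2 Hzy)). apply (at_le y zy Hy). apply (H1 y zy); auto. }
  assert (Hpmin : minimal_pt p).
  { intros Q HQ. apply NNPP; intro HQp.
    destruct (ptlt_sep Q p (conj HQ HQp)) as [b [Hb1 Hb2]].
    assert (Hc : mem p (coimp top b)) by (eapply coimp_easy; eauto; apply mem_top).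
    destruct Hc as [w1 [Hw1 H1]]. destruct Hb1 as [w2 [Hw2 H2]].
    destruct (B_max w1 w2 Hw1 Hw2) as [w [Hw [K1 K2]]].
    destruct (Hcof w Hw) as [y [zy [Hy [Hzy [Hwz Hp]]]]].
    assert (K : mem y (coimp top b)) by (apply (H1 y zy); auto; eapply ptle_trans; eauto).
    apply (coimp_min y _ _ (proj1 (at_att _ _ Hy))) in K. apply (proj2 K).
    apply (H2 y zy); auto. eapply ptle_trans; eauto. }
  assert (Hk : forall u, inC u -> ptlt m u -> ptlt u x -> False \/ True -> forall d c, ~ mem m d -> mem x c -> mem p (imp (cut d) c)).
  { intros u _ _ _ _ d c Hd Hc. destruct (ul_stab [c]) as [ws [Hws Hs]].
    exists ws. split; auto. intros y zy Hy Hzy Hwz Hp. apply imp_at with (z := zy); auto.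
    split.
    - intros K. apply cut_iff in K; auto. exfalso. apply (att_notC y (at_att _ _ Hy)). apply K.
    - intros Q HQ _. assert (HQC : inC Q) by (eapply inC_up; [apply Hzy|exact HQ]).
      destruct (C_lt_or_ge Q x HQC ul_xC) as [K|K]; [|apply K; auto].
      apply (Hs Q (conj HQC K)); simpl; auto. eapply ptle_trans; eauto. }
  assert (Hpatt : att p).
  { split; auto. intros Hpm.
    destruct (ul_nomax m ul_Bm) as [w [Hw Hmw]].
    destruct (ptlt_sep m w Hmw) as [d [Hd1 Hd2]].
    destruct (ptlt_sep w x (proj2 Hw)) as [c [Hc1 Hc2]].
    assert (K : mem p (imp (cut d) c)) by (apply (Hk w); auto; apply Hw).
    rewrite Hpm in K. apply Hc2. eapply imp_easy; [exact K|apply (proj1 Hw)|].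
    apply cut_iff; auto. split; [apply Hw|auto]. }
  exists p. split.
  - split; auto. split.
    + split; auto. intros E. apply (att_notC p Hpatt). rewrite E. apply ul_xC.
    + intros [u [Hu1 Hu2]].
      assert (HuC : inC u).
      { apply notmin_inC. intros Hu. apply (proj2 Hu1). apply Hu. apply Hu1. }
      assert (Hmu : ptlt m u).
      { split; auto. intros E. subst u. apply (proj2 Hpatt). apply Hm. apply Hu1. }
      destruct (ptlt_sep m u Hmu) as [d [Hd1 Hd2]].
      destruct (ptlt_sep u x Hu2) as [c [Hc1 Hc2]].
      assert (K : mem p (imp (cut d) c)) by (apply (Hk u); auto).
      apply Hc2. eapply imp_easy; [exact K|apply Hu1|]. apply cut_iff; auto.
  - rewrite <- Hpy0. apply prof_pl. intros g Hgg. simpl. split.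
    + intros [w1 [Hw1 H1]]. destruct (Hcof w1 Hw1) as [y [zy [Hy [Hzy [Hwz Hp]]]]].
      apply (pl_prof y y0); [congruence|auto|]. apply (H1 y zy); auto.
    + intros Hg0. exists m. split; [apply ul_Bm|]. intros y zy Hy Hzy _ Hp.
      apply (pl_prof y0 y); [congruence|auto|auto].
Qed.

Lemma ul_pred_att z : immpred z x -> at_ z x.
Proof.
  intros Hz. split; auto. destruct (C_or_att z) as [H|H]; auto.
  exfalso. apply (proj2 Hup). exists z. split; auto.
Qed.

Lemma ul_two : at_least_two (fun z => immpred z x).
Proof.
  destruct (ul_stab gens) as [z0 [Hz0 Hs]].
  destruct (ul_prof z0 Hz0 (allbl (length gens))) as [z1 [Hz1 [Hz01 Hpr]]].
  assert (Htwo : exists p1 p2, p1 <> p2 /\ cof p1 /\ cof p2).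
  { apply NNPP; intro Hn.
    assert (Huniq : forall p1 p2, cof p1 -> cof p2 -> p1 = p2).
    { intros p1 p2 H1 H2. apply NNPP; intro E. apply Hn. exists p1, p2. auto. }
    assert (Hcofy : forall y zy, at_ y zy -> B zy -> ptle z1 zy -> cof (pl y)).
    { intros y zy Hy Hzy Hz1zy. apply (Hpr (pl y) (pl_in y)). exists y, zy. auto. }
    destruct (classic (exists y zy, at_ y zy /\ B zy /\ ptle z1 zy)) as [[y [zy [Hy [Hzy Hz1zy]]]]|Hno].
    - apply (up_core zy Hzy).
      + intros v g Hv Hzv Hgg.
        rewrite (Hs v Hv (ptle_trans _ _ _ Hz01 (ptle_trans _ _ _ Hz1zy Hzv)) g Hgg),
          (Hs zy Hzy (ptle_trans _ _ _ Hz01 Hz1zy) g Hgg). tauto.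
      + intros y1 y2 zy1 zy2 Hy1 Hy2 HB1 H1 HB2 H2. apply Huniq.
        * apply (Hcofy y1 zy1); auto. eapply ptle_trans; eauto.
        * apply (Hcofy y2 zy2); auto. eapply ptle_trans; eauto.
      + right. exists y. exact Hy.
    - apply (up_core z1 Hz1).
      + intros v g Hv Hzv Hgg.
        rewrite (Hs v Hv (ptle_trans _ _ _ Hz01 Hzv) g Hgg), (Hs z1 Hz1 Hz01 g Hgg). tauto.
      + intros y1 y2 zy1 zy2 Hy1 Hy2 HB1 H1 HB2 H2. exfalso. apply Hno. exists y1, zy1. auto.
      + left. intros y zy Hy Hzy Hz. apply Hno. exists y, zy. auto. }
  destruct Htwo as [p1 [p2 [Hne [H1 H2]]]].
  destruct (ul_lim p1 H1) as [q1 [Hq1 Hq1']]. destruct (ul_lim p2 H2) as [q2 [Hq2 Hq2']].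
  exists q1, q2. split; [intros E; subst; apply Hne; congruence|].
  split; [apply Hq1|apply Hq2].
Qed.

Lemma ul_atmost : at_most (Nat.pow 2 (length gens)) (fun z => immpred z x).
Proof.
  set (pick := fun (pi : list bool) =>
    match excluded_middle_informative (exists y, at_ y x /\ pl y = pi) with
    | left H => proj1_sig (constructive_indefinite_description _ H)
    | right _ => x end).
  exists (map pick (allbl (length gens))). split; [rewrite length_map, allbl_len; auto|].
  intros z Hz. apply ul_pred_att in Hz. apply in_map_iff. exists (pl z). split; [|apply pl_in].
  unfold pick. destruct (excluded_middle_informative _) as [K|K].
  - destruct (constructive_indefinite_description _ K) as [y [Hy1 Hy2]]. simpl.
    apply (profile_at y z x Hy1 Hz). apply pl_prof; auto.
  - exfalso; apply K; exists z; auto.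
Qed.

End UpLimit.


Definition agree (es : list A) P Q := forall e, In e es -> (mem P e <-> mem Q e).
Lemma bmem_false P a : bmem P a = false <-> ~ mem P a.
Proof. unfold bmem. destruct (excluded_middle_informative _); split; intros; auto; try discriminate; contradiction. Qed.
Lemma cont_of_agree {Y : Type} (f : pt A -> Y) es : (forall P Q, agree es P Q -> f P = f Q) -> continuous_to f.
Proof.
  intros H S P HP. exists (map (fun e => (e, bmem P e)) es). split.
  - intros ab Hab. apply in_map_iff in Hab. destruct Hab as [e [<- He]]. simpl.
    split; intros K; [apply bmem_true; auto|apply bmem_false; auto].
  - intros Q HQ. replace (f Q) with (f P); auto. apply H. intros e He.
    assert (K := HQ (e, bmem P e) (in_map (fun e => (e, bmem P e)) es e He)). simpl in K.
    destruct (bmem P e) eqn:E.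
    + apply bmem_true in E. split; auto. intros; apply K; auto.
    + apply bmem_false in E. split; intros; [contradiction|]. exfalso; apply K; auto.
Qed.

Lemma imm_between z x P : immpred z x -> inC z -> inC P -> ptlt P x -> ptle P z.
Proof.
  intros Hzx HzC HPC HPx. destruct (C_lt_or_ge z P HzC HPC) as [K|K]; auto.
  exfalso. apply (proj2 Hzx). exists P. auto.
Qed.

Section F1map.
Variables x z : pt A.
Hypothesis Hmz : ptlt m z.
Hypothesis Hzx : immpred z x.
Hypothesis Hnoatt : forall y zy, at_ y zy -> ptle x zy -> False.

Lemma F1_onto : maps_onto (A := A) F1le.
Proof.
  assert (HzC : inC z) by apply Hmz.
  assert (HxC : inC x) by (eapply inC_up; [exact HzC|apply Hzx]).
  destruct (ptlt_sep m z Hmz) as [c1 [Hc1z Hc1m]].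
  destruct (ptlt_sep z x (proj1 Hzx)) as [c2 [Hc2x Hc2z]].
  set (u := cut c1). set (v := meet u c2).
  assert (Fu : forall P, mem P u <-> inC P /\ mem P c1) by (intros; apply cut_iff; auto).
  assert (Fv : forall P, mem P v <-> inC P /\ ptle x P).
  { intros P. unfold v. rewrite mem_meet, Fu. split.
    - intros [[H1 H2] H3]. split; auto. destruct (C_lt_or_ge P x H1 HxC) as [K|K]; auto.
      exfalso. apply Hc2z. apply (imm_between z x P Hzx HzC H1 K). auto.
    - intros [H1 H2]. split; [split; auto|]; apply H2; auto. apply (proj1 (proj1 Hzx)); auto. }
  assert (Hnu : forall P, ~ mem P u -> ptle P z).
  { intros P HP. rewrite Fu in HP. destruct (C_or_att P) as [H|H].
    - destruct (C_lt_or_ge P z H HzC) as [K|K]; [apply ptlt_le; auto|].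
      exfalso. apply HP. split; auto.
    - destruct (at_ex P H) as [zP HzP]. destruct (C_lt_or_ge zP x (proj1 (at_C _ _ HzP)) HxC) as [K|K].
      + eapply ptle_trans; [apply at_le; eauto|]. apply (imm_between z x zP Hzx HzC); auto. apply (at_C _ _ HzP).
      + exfalso. eapply Hnoatt; eauto. }
  assert (Hvu : forall P, mem P v -> mem P u) by (intros P H; unfold v in H; apply mem_meet in H; apply H).
  set (f := fun P => if bmem P v then F1a else if bmem P u then F1b else F1c).
  assert (fa : forall P, mem P v -> f P = F1a) by (intros P H; unfold f; apply bmem_true in H; rewrite H; auto).
  assert (fb : forall P, ~ mem P v -> mem P u -> f P = F1b).
  { intros P H1 H2; unfold f; apply bmem_false in H1; apply bmem_true in H2; rewrite H1, H2; auto. }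
  assert (fc : forall P, ~ mem P u -> f P = F1c).
  { intros P H; unfold f. assert (~ mem P v) by (intro K; apply H, Hvu, K).
    apply bmem_false in H; apply bmem_false in H0; rewrite H, H0; auto. }
  assert (Hr_v : mem r v) by (apply Fv; split; [apply r_inC|apply Hr]).
  assert (Hz_u : mem z u) by (apply Fu; split; auto).
  assert (Hz_v : ~ mem z v).
  { intros K. apply Fv in K. apply (ptlt_not_ge _ _ (proj1 Hzx)). apply K. }
  assert (Hm_u : ~ mem m u) by (intros K; apply Fu in K; apply Hc1m, K).
  exists f. split; [|split].
  - apply (cont_of_agree f [u; v]). intros P Q H. unfold f.
    rewrite (bmem_eq P Q v (H v ltac:(simpl; auto))), (bmem_eq P Q u (H u ltac:(simpl; auto))). auto.
  - intros [| |]; [exists r; auto|exists z; apply fb; auto|exists m; apply fc; auto].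
  - split; [|split].
    + intros P Q HPQ. destruct (classic (mem P v)) as [H1|H1].
      * rewrite (fa P H1), (fa Q (HPQ _ H1)). left; auto.
      * destruct (classic (mem P u)) as [H2|H2].
        -- rewrite (fb P H1 H2). destruct (classic (mem Q v)) as [H3|H3].
           ++ rewrite (fa Q H3). right; simpl; auto.
           ++ rewrite (fb Q H3 (HPQ _ H2)). left; auto.
        -- rewrite (fc P H2). destruct (f Q); [right; simpl; auto|right; simpl; auto|left; auto].
    + intros P y Hy. destruct Hy as [<-|Hy]; [exists P; split; [apply ptle_refl|auto]|].
      destruct (classic (mem P v)) as [H1|H1]; [rewrite (fa P H1) in Hy; destruct y; destruct Hy|].
      destruct (classic (mem P u)) as [H2|H2].
      * rewrite (fb P H1 H2) in Hy. destruct y; try destruct Hy. exists r. split; [apply Hr|auto].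
      * rewrite (fc P H2) in Hy. destruct y; try destruct Hy.
        -- exists r. split; [apply Hr|auto].
        -- exists z. split; [apply Hnu; auto|apply fb; auto].
    + intros P y Hy. destruct Hy as [->|Hy]; [exists P; split; [apply ptle_refl|auto]|].
      destruct (classic (mem P v)) as [H1|H1].
      * rewrite (fa P H1) in Hy. apply Fv in H1. destruct y; try destruct Hy.
        -- exists z. split; [eapply ptle_trans; [apply (proj1 Hzx)|apply H1]|apply fb; auto].
        -- exists m. split; [apply H1|apply fc; auto].
      * destruct (classic (mem P u)) as [H2|H2].
        -- rewrite (fb P H1 H2) in Hy. apply Fu in H2. destruct y; try destruct Hy.
           exists m. split; [apply H2|apply fc; auto].
        -- rewrite (fc P H2) in Hy. destruct y; destruct Hy.
Qed.
End F1map.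


Section F2map.
Variables x z w w' yw : pt A.
Hypothesis Hmz : ptlt m z.
Hypothesis Hzx : immpred z x.
Hypothesis Hxw : ptlt x w.
Hypothesis Hw'C : inC w'.
Hypothesis Hw'w : immpred w' w.
Hypothesis Hyw : at_ yw w.
Hypothesis Hband : forall y zy, at_ y zy -> ptle x zy -> ptlt zy w -> False.

Lemma F2_onto : maps_onto (A := A) F2le.
Proof.
  assert (HzC : inC z) by apply Hmz.
  assert (HxC : inC x) by (eapply inC_up; [exact HzC|apply Hzx]).
  assert (HwC : inC w) by (eapply inC_up; [exact HxC|apply Hxw]).
  destruct (ptlt_sep m z Hmz) as [c1 [Hc1z Hc1m]].
  destruct (ptlt_sep z x (proj1 Hzx)) as [c2 [Hc2x Hc2z]].
  destruct (ptlt_sep w' w (proj1 Hw'w)) as [c3 [Hc3w Hc3w']].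
  set (u1 := cut c1). set (u2 := meet u1 c2). set (u3 := meet u2 c3). set (k := imp u1 u3).
  assert (Fu1 : forall P, mem P u1 <-> inC P /\ mem P c1) by (intros; apply cut_iff; auto).
  assert (Fu2 : forall P, mem P u2 <-> inC P /\ ptle x P).
  { intros P. unfold u2. rewrite mem_meet, Fu1. split.
    - intros [[H1 H2] H3]. split; auto. destruct (C_lt_or_ge P x H1 HxC) as [K|K]; auto.
      exfalso. apply Hc2z. apply (imm_between z x P Hzx HzC H1 K). auto.
    - intros [H1 H2]. split; [split; auto|]; apply H2; auto. apply (proj1 (proj1 Hzx)); auto. }
  assert (Fu3 : forall P, mem P u3 <-> inC P /\ ptle w P).
  { intros P. unfold u3. rewrite mem_meet, Fu2. split.
    - intros [[H1 H2] H3]. split; auto. destruct (C_lt_or_ge P w H1 HwC) as [K|K]; auto.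
      exfalso. apply Hc3w'. apply (imm_between w' w P Hw'w Hw'C H1 K). auto.
    - intros [H1 H2]. split; [split; auto|]; [|apply H2; auto].
      eapply ptle_trans; [apply ptlt_le, Hxw|exact H2]. }
  assert (H32 : forall P, mem P u3 -> mem P u2) by (intros P H; apply mem_meet in H; apply H).
  assert (H21 : forall P, mem P u2 -> mem P u1) by (intros P H; apply mem_meet in H; apply H).
  assert (Hz_u1 : mem z u1) by (apply Fu1; auto).
  assert (Hz_u2 : ~ mem z u2) by (intros K; apply Fu2 in K; apply (ptlt_not_ge _ _ (proj1 Hzx)), K).
  assert (Hx_u2 : mem x u2) by (apply Fu2; split; [auto|apply ptle_refl]).
  assert (Hx_u3 : ~ mem x u3) by (intros K; apply Fu3 in K; apply (ptlt_not_ge _ _ Hxw), K).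
  assert (Hr_u3 : mem r u3) by (apply Fu3; split; [apply r_inC|apply Hr]).
  assert (Hw_u3 : mem w u3) by (apply Fu3; split; [auto|apply ptle_refl]).
  assert (Hatt2 : forall P zP, at_ P zP -> ~ ptle w zP -> ptle zP z).
  { intros P zP HP Hn. destruct (at_C _ _ HP) as [HzPC _].
    destruct (C_lt_or_ge zP w HzPC HwC) as [K|K]; [|contradiction].
    destruct (C_lt_or_ge zP x HzPC HxC) as [K'|K'].
    - apply (imm_between z x zP Hzx HzC HzPC K').
    - exfalso. eapply Hband; eauto. }
  assert (Fk_att : forall P zP, at_ P zP -> (mem P k <-> ptle w zP)).
  { intros P zP HP. split.
    - intros HK. apply NNPP; intro Hn. apply Hz_u2, H32.
      eapply imp_easy; [exact HK| |exact Hz_u1].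
      eapply ptle_trans; [apply at_le; eauto|apply (Hatt2 P zP HP Hn)].
    - intros Hw. unfold k. rewrite (imp_at P zP u1 u3 HP). split.
      + intros K. apply Fu1 in K. exfalso. apply (att_notC P (at_att _ _ HP)). apply K.
      + intros Q HQ _. apply Fu3. split; [eapply inC_up; [apply (at_C _ _ HP)|exact HQ]|].
        eapply ptle_trans; eauto. }
  assert (Fk_C : forall P, inC P -> ~ mem P u1 -> ~ mem P k).
  { intros P HP H1 HK. apply Hz_u2, H32. eapply imp_easy; [exact HK| |exact Hz_u1].
    destruct (C_lt_or_ge P z HP HzC) as [K|K]; [apply ptlt_le; auto|].
    exfalso. apply H1. apply Fu1. split; auto. }
  set (f := fun P => if bmem P u3 then F2a else if bmem P u2 then F2b else
                     if bmem P u1 then F2c else if bmem P k then F2a' else F2d).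
  assert (fa : forall P, mem P u3 -> f P = F2a) by (intros P H; unfold f; apply bmem_true in H; rewrite H; auto).
  assert (fb : forall P, ~ mem P u3 -> mem P u2 -> f P = F2b).
  { intros P H1 H2; unfold f; apply bmem_false in H1; apply bmem_true in H2; rewrite H1, H2; auto. }
  assert (fc : forall P, ~ mem P u2 -> mem P u1 -> f P = F2c).
  { intros P H1 H2; unfold f. assert (~ mem P u3) by (intro K; apply H1, H32, K).
    apply bmem_false in H1; apply bmem_false in H; apply bmem_true in H2; rewrite H, H1, H2; auto. }
  assert (fa' : forall P, ~ mem P u1 -> mem P k -> f P = F2a').
  { intros P H1 H2; unfold f. assert (~ mem P u2) by (intro K; apply H1, H21, K).
    assert (~ mem P u3) by (intro K; apply H, H32, K).
    apply bmem_false in H1; apply bmem_false in H; apply bmem_false in H0; apply bmem_true in H2.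
    rewrite H, H0, H1, H2; auto. }
  assert (fd : forall P, ~ mem P u1 -> ~ mem P k -> f P = F2d).
  { intros P H1 H2; unfold f. assert (~ mem P u2) by (intro K; apply H1, H21, K).
    assert (~ mem P u3) by (intro K; apply H, H32, K).
    apply bmem_false in H1; apply bmem_false in H; apply bmem_false in H0; apply bmem_false in H2.
    rewrite H, H0, H1, H2; auto. }
  assert (Hm_u1 : ~ mem m u1) by (intros K; apply Fu1 in K; apply Hc1m, K).
  assert (Hm_k : ~ mem m k) by (apply Fk_C; auto; apply m_inC).
  assert (Hyw_u1 : ~ mem yw u1) by (intros K; apply Fu1 in K; apply (att_notC yw (at_att _ _ Hyw)), K).
  assert (Hyw_k : mem yw k) by (apply (Fk_att yw w Hyw); apply ptle_refl).
  assert (Hdz : forall P, ~ mem P u1 -> ~ mem P k -> ptle P z).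
  { intros P H1 H2. destruct (C_or_att P) as [H|H].
    - destruct (C_lt_or_ge P z H HzC) as [K|K]; [apply ptlt_le; auto|].
      exfalso. apply H1. apply Fu1. split; auto.
    - destruct (at_ex P H) as [zP HzP]. eapply ptle_trans; [apply at_le; eauto|].
      apply (Hatt2 P zP HzP). intros K. apply H2. apply (Fk_att P zP HzP). auto. }
  assert (Hcx : forall P, ~ mem P u2 -> mem P u1 -> ptle P x).
  { intros P H1 H2. apply Fu1 in H2. destruct (C_lt_or_ge P x (proj1 H2) HxC) as [K|K]; [apply ptlt_le; auto|].
    exfalso. apply H1. apply Fu2. split; [apply H2|auto]. }
  assert (Hcls : forall P, (mem P u3 /\ f P = F2a) \/ (~ mem P u3 /\ mem P u2 /\ f P = F2b) \/
                 (~ mem P u2 /\ mem P u1 /\ f P = F2c) \/ (~ mem P u1 /\ mem P k /\ f P = F2a') \/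
                 (~ mem P u1 /\ ~ mem P k /\ f P = F2d)).
  { intros P. destruct (classic (mem P u3)) as [H3|H3]; [left; auto|right].
    destruct (classic (mem P u2)) as [H2|H2]; [left; auto|right].
    destruct (classic (mem P u1)) as [H1|H1]; [left; auto|right].
    destruct (classic (mem P k)) as [Hk|Hk]; [left; auto|right; auto]. }
  exists f. split; [|split].
  - apply (cont_of_agree f [u1; u2; u3; k]). intros P Q H. unfold f.
    rewrite (bmem_eq P Q u1 (H u1 ltac:(simpl; auto))), (bmem_eq P Q u2 (H u2 ltac:(simpl; auto))),
      (bmem_eq P Q u3 (H u3 ltac:(simpl; auto))), (bmem_eq P Q k (H k ltac:(simpl; auto))). auto.
  - intros [| | | |].
    + exists r; auto.
    + exists x; apply fb; auto.
    + exists z; apply fc; auto.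
    + exists m; apply fd; auto.
    + exists yw; apply fa'; auto.
  - split; [|split].
    + intros P Q HPQ.
      destruct (Hcls P) as [[H1 E]|[[H1 [H2 E]]|[[H1 [H2 E]]|[[H1 [H2 E]]|[H1 [H2 E]]]]]]; rewrite E.
      * rewrite (fa Q (HPQ _ H1)). left; auto.
      * destruct (Hcls Q) as [[K1 E']|[[K1 [K2 E']]|[[K1 [K2 E']]|[[K1 [K2 E']]|[K1 [K2 E']]]]]]; rewrite E';
          try (left; reflexivity); try (right; simpl; auto); exfalso; auto.
      * destruct (Hcls Q) as [[K1 E']|[[K1 [K2 E']]|[[K1 [K2 E']]|[[K1 [K2 E']]|[K1 [K2 E']]]]]]; rewrite E';
          try (left; reflexivity); try (right; simpl; auto); exfalso; auto.
      * destruct (C_or_att P) as [HC|HA]; [exfalso; apply (Fk_C P HC H1 H2)|].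
        destruct (at_ex P HA) as [zP HzP].
        destruct (above_at P zP Q HzP HPQ) as [->|K]; [left; congruence|].
        rewrite (fa Q); [right; simpl; auto|]. apply Fu3. split.
        -- eapply inC_up; [apply (at_C _ _ HzP)|exact K].
        -- eapply ptle_trans; [apply (Fk_att P zP HzP); auto|exact K].
      * destruct (Hcls Q) as [[K1 E']|[[K1 [K2 E']]|[[K1 [K2 E']]|[[K1 [K2 E']]|[K1 [K2 E']]]]]]; rewrite E';
          try (left; reflexivity); try (right; simpl; auto).
        exfalso. destruct (C_or_att Q) as [HC|HA]; [apply (Fk_C Q HC K1 K2)|].
        assert (P = Q) by (apply (proj1 HA); auto). subst. contradiction.
    + intros P y Hy. destruct Hy as [<-|Hy]; [exists P; split; [apply ptle_refl|auto]|].
      destruct (Hcls P) as [[H1 E]|[[H1 [H2 E]]|[[H1 [H2 E]]|[[H1 [H2 E]]|[H1 [H2 E]]]]]]; rewrite E in Hy;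
        destruct y; try destruct Hy; try (exists r; split; [apply Hr|apply fa; auto]; fail).
      * exists x. split; [apply Hcx; auto|apply fb; auto].
      * exists x. split; [eapply ptle_trans; [apply Hdz; auto|apply (proj1 Hzx)]|apply fb; auto].
      * exists z. split; [apply Hdz; auto|apply fc; auto].
    + intros P y Hy. destruct Hy as [->|Hy]; [exists P; split; [apply ptle_refl|auto]|].
      destruct (Hcls P) as [[H1 E]|[[H1 [H2 E]]|[[H1 [H2 E]]|[[H1 [H2 E]]|[H1 [H2 E]]]]]]; rewrite E in Hy;
        destruct y; try destruct Hy.
      * apply Fu3 in H1. exists x. split; [eapply ptle_trans; [apply ptlt_le, Hxw|apply H1]|apply fb; auto].
      * apply Fu3 in H1. exists z. split; [|apply fc; auto].
        eapply ptle_trans; [apply (proj1 Hzx)|eapply ptle_trans; [apply ptlt_le, Hxw|apply H1]].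
      * apply Fu3 in H1. exists m. split; [apply H1|apply fd; auto].
      * apply Fu3 in H1. exists yw. split; [eapply ptle_trans; [apply at_le; eauto|apply H1]|apply fa'; auto].
      * apply Fu2 in H2. exists z. split; [eapply ptle_trans; [apply (proj1 Hzx)|apply H2]|apply fc; auto].
      * apply Fu2 in H2. exists m. split; [apply H2|apply fd; auto].
      * apply Fu1 in H2. exists m. split; [apply H2|apply fd; auto].
Qed.
End F2map.


Lemma att_sep_m y : att y -> exists c0, mem y c0 /\ ~ mem m c0.
Proof.
  intros Hy. apply NNPP; intro H. apply (proj2 Hy). apply Hm.
  intros c Hc. apply NNPP; intro Hc'. apply H. exists c. auto.
Qed.

Section F3map.
Variables x z y1 y2 : pt A.
Hypothesis HzC : inC z.
Hypothesis Hzx : immpred z x.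
Hypothesis Hy1 : at_ y1 x.
Hypothesis Hy2 : at_ y2 x.
Hypothesis Hne : y1 <> y2.
Hypothesis Hsucc : x = r \/ exists xp, immpred x xp.

Lemma F3_xC : inC x.
Proof. apply (at_C _ _ Hy1). Qed.

Lemma F3_t : exists t, forall P, mem P t <-> inC P /\ ptle x P.
Proof.
  destruct (ptlt_sep z x (proj1 Hzx)) as [cx [Hcx1 Hcx2]].
  assert (Hcxm : ~ mem m cx) by (intros K; apply Hcx2, HzC, K).
  exists (cut cx). intros P. rewrite cut_iff; auto. split.
  - intros [H1 H2]. split; auto. destruct (C_lt_or_ge P x H1 F3_xC) as [K|K]; auto.
    exfalso. apply Hcx2. apply (imm_between z x P Hzx HzC H1 K). auto.
  - intros [H1 H2]. split; auto.
Qed.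

Lemma iso_att t y : (forall P, mem P t <-> inC P /\ ptle x P) -> at_ y x ->
  exists es, forall P, agree es P y -> P = y.
Proof.
  intros Ht Hy.
  destruct (att_sep_m y (at_att _ _ Hy)) as [c0 [Hc0y Hc0m]].
  set (h := coimp top c0).
  assert (Hyh : ~ mem y h) by (unfold h; rewrite (coimp_min y _ _ (proj1 (at_att _ _ Hy))); tauto).
  assert (Hyht : mem y (imp h t)).
  { rewrite (imp_at y x h t Hy). split; [intros K; contradiction|].
    intros Q HQ _. apply Ht. split; auto. eapply inC_up; [apply F3_xC|exact HQ]. }
  assert (HCh : forall Q, inC Q -> mem Q h) by (intros Q HQ; eapply coimp_easy; [exact HQ|apply mem_top|exact Hc0m]).
  assert (Hbase : forall P, ~ mem P h -> mem P (imp h t) -> prof_eq P y ->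
     (forall zP, at_ P zP -> ptlt x zP -> False) -> P = y).
  { intros P H1 H2 H3 H4.
    assert (HPA : att P) by (destruct (C_or_att P) as [K|K]; auto; exfalso; apply H1, HCh, K).
    destruct (at_ex P HPA) as [zP HzP]. destruct (at_C _ _ HzP) as [HzPC _].
    destruct (C_lt_or_ge zP x HzPC F3_xC) as [K|K].
    - exfalso. assert (K1 : mem zP t) by (eapply imp_easy; [exact H2|apply at_le; eauto|apply HCh; auto]).
      apply Ht in K1. apply (ptlt_not_ge _ _ K). apply K1.
    - destruct (classic (x = zP)) as [<-|Hxz]; [apply (profile_at P y x HzP Hy H3)|].
      exfalso. apply (H4 zP HzP). split; auto. }
  destruct Hsucc as [Exr|[xp Hxp]].
  - exists (h :: imp h t :: gens). intros P HP. apply Hbase.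
    + rewrite (HP h); simpl; auto.
    + rewrite (HP (imp h t)); simpl; auto.
    + intros g Hg. apply HP. simpl; auto.
    + intros zP HzP Hlt. subst x. apply (ptlt_not_ge _ _ Hlt). apply Hr.
  - destruct (ptlt_sep x xp (proj1 Hxp)) as [q [Hq1 Hq2]].
    exists (h :: imp h t :: imp t q :: gens). intros P HP. apply Hbase.
    + rewrite (HP h); simpl; auto.
    + rewrite (HP (imp h t)); simpl; auto.
    + intros g Hg. apply HP. simpl; auto.
    + intros zP HzP Hlt.
      assert (Hyq : ~ mem y (imp t q)).
      { intros K. apply Hq2. eapply imp_easy; [exact K|apply at_le; eauto|]. apply Ht. split; [apply F3_xC|apply ptle_refl]. }
      apply Hyq. apply (HP (imp t q)); [simpl; auto|].
      rewrite (imp_at P zP t q HzP). split.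
      * intros K. apply Ht in K. exfalso. apply (att_notC P (at_att _ _ HzP)). apply K.
      * intros Q HQ _. destruct (at_C _ _ HzP) as [HzPC _].
        assert (Hxpz : ptle xp zP).
        { destruct (C_lt_or_ge zP xp HzPC (inC_up _ _ F3_xC (proj1 (proj1 Hxp)))) as [K|K]; auto.
          exfalso. assert (K' := imm_between x xp zP Hxp F3_xC HzPC K).
          apply (proj2 Hlt). apply ptle_antisym; auto. apply Hlt. }
        apply HQ, Hxpz, Hq1.
Qed.

Lemma F3_onto : maps_onto (A := A) F3le.
Proof.
  destruct F3_t as [t Ht].
  destruct (iso_att t y1 Ht Hy1) as [es1 Hes1].
  destruct (iso_att t y2 Ht Hy2) as [es2 Hes2].
  assert (Ha1 : forall P, agree es1 P y1 <-> P = y1).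
  { intros P; split; [apply Hes1|intros ->; intros e _; tauto]. }
  assert (Ha2 : forall P, agree es2 P y2 <-> P = y2).
  { intros P; split; [apply Hes2|intros ->; intros e _; tauto]. }
  set (f := fun P => if bmem P t then F3t else
     if excluded_middle_informative (agree es1 P y1) then F3u2 else
     if excluded_middle_informative (agree es2 P y2) then F3u3 else F3u1).
  assert (Hy1t : ~ mem y1 t) by (intros K; apply Ht in K; apply (att_notC y1 (at_att _ _ Hy1)), K).
  assert (Hy2t : ~ mem y2 t) by (intros K; apply Ht in K; apply (att_notC y2 (at_att _ _ Hy2)), K).
  assert (Hmt : ~ mem m t).
  { intros K; apply Ht in K. destruct K as [_ K].
    apply (ptlt_not_ge _ _ (proj1 Hzx)). eapply ptle_trans; [exact K|apply HzC]. }
  assert (ft : forall P, mem P t -> f P = F3t) by (intros P H; unfold f; apply bmem_true in H; rewrite H; auto).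
  assert (f1 : f y1 = F3u2).
  { unfold f. apply bmem_false in Hy1t. rewrite Hy1t.
    destruct (excluded_middle_informative _) as [_|K]; auto. exfalso; apply K, Ha1; auto. }
  assert (f2 : f y2 = F3u3).
  { unfold f. apply bmem_false in Hy2t. rewrite Hy2t.
    destruct (excluded_middle_informative _) as [K|_]; [apply Ha1 in K; exfalso; auto|].
    destruct (excluded_middle_informative _) as [_|K]; auto. exfalso; apply K, Ha2; auto. }
  assert (fo : forall P, ~ mem P t -> P <> y1 -> P <> y2 -> f P = F3u1).
  { intros P H1 H2 H3. unfold f. apply bmem_false in H1. rewrite H1.
    destruct (excluded_middle_informative _) as [K|_]; [apply Ha1 in K; exfalso; auto|].
    destruct (excluded_middle_informative _) as [K|_]; [apply Ha2 in K; exfalso; auto|auto]. }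
  assert (Hcls : forall P, (mem P t /\ f P = F3t) \/ (P = y1 /\ f P = F3u2) \/ (P = y2 /\ f P = F3u3) \/
      (~ mem P t /\ P <> y1 /\ P <> y2 /\ f P = F3u1)).
  { intros P. destruct (classic (mem P t)) as [H|H]; [left; auto|right].
    destruct (classic (P = y1)) as [->|H1]; [left; auto|right].
    destruct (classic (P = y2)) as [->|H2]; [left; auto|right; auto]. }
  assert (Habove : forall y P, at_ y x -> ptle y P -> P = y \/ mem P t).
  { intros y P Hy HP. destruct (above_at y x P Hy HP) as [K|K]; auto. right. apply Ht. split; auto.
    eapply inC_up; [apply F3_xC|exact K]. }
  assert (Hm1 : m <> y1) by (intros E; apply (proj2 (at_att _ _ Hy1)); auto).
  assert (Hm2 : m <> y2) by (intros E; apply (proj2 (at_att _ _ Hy2)); auto).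
  assert (Hr_t : mem r t) by (apply Ht; split; [apply r_inC|apply Hr]).
  exists f. split; [|split].
  - apply (cont_of_agree f (t :: es1 ++ es2)). intros P Q H. unfold f.
    rewrite (bmem_eq P Q t (H t ltac:(simpl; auto))).
    assert (E1 : agree es1 P y1 <-> agree es1 Q y1).
    { split; intros K e He; [rewrite <- (H e)|rewrite (H e)]; auto; simpl; right; apply in_or_app; auto. }
    assert (E2 : agree es2 P y2 <-> agree es2 Q y2).
    { split; intros K e He; [rewrite <- (H e)|rewrite (H e)]; auto; simpl; right; apply in_or_app; auto. }
    destruct (excluded_middle_informative (agree es1 P y1)), (excluded_middle_informative (agree es1 Q y1)); try tauto;
    destruct (excluded_middle_informative (agree es2 P y2)), (excluded_middle_informative (agree es2 Q y2)); tauto.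
  - intros [| | |].
    + exists r; auto.
    + exists m; apply fo; auto.
    + exists y1; auto.
    + exists y2; auto.
  - split; [|split].
    + intros P Q HPQ.
      destruct (Hcls P) as [[H1 E]|[[H1 E]|[[H1 E]|[H1 [H2 [H3 E]]]]]]; rewrite E.
      * rewrite (ft Q (HPQ _ H1)). left; auto.
      * subst P. destruct (Habove y1 Q Hy1 HPQ) as [->|K]; [left; auto|rewrite (ft Q K); right; simpl; auto].
      * subst P. destruct (Habove y2 Q Hy2 HPQ) as [->|K]; [left; auto|rewrite (ft Q K); right; simpl; auto].
      * destruct (Hcls Q) as [[K1 E']|[[K1 E']|[[K1 E']|[K1 [K2 [K3 E']]]]]]; rewrite E'.
        -- right; simpl; auto.
        -- subst Q. exfalso. apply H2. apply (proj1 (proj1 Hy1)); auto.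
        -- subst Q. exfalso. apply H3. apply (proj1 (proj1 Hy2)); auto.
        -- left; auto.
    + intros P y Hy. destruct Hy as [<-|Hy]; [exists P; split; [apply ptle_refl|auto]|].
      destruct (Hcls P) as [[H1 E]|[[H1 E]|[[H1 E]|[H1 [H2 [H3 E]]]]]]; rewrite E in Hy;
        destruct y; simpl in Hy; try destruct Hy; exists r; split; try apply Hr; auto.
    + intros P y Hy. destruct Hy as [->|Hy]; [exists P; split; [apply ptle_refl|auto]|].
      destruct (Hcls P) as [[H1 E]|[[H1 E]|[[H1 E]|[H1 [H2 [H3 E]]]]]]; rewrite E in Hy;
        destruct y; simpl in Hy; try destruct Hy; apply Ht in H1.
      * exists m. split; [apply H1|apply fo; auto].
      * exists y1. split; [eapply ptle_trans; [apply at_le; eauto|apply H1]|auto].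
      * exists y2. split; [eapply ptle_trans; [apply at_le; eauto|apply H1]|auto].
Qed.
End F3map.


Section Final.
Hypothesis HF1 : ~ maps_onto (A := A) F1le.
Hypothesis HF2 : ~ maps_onto (A := A) F2le.
Hypothesis HF3 : ~ maps_onto (A := A) F3le.
Hypothesis Hinf : infinite_alg A.

Lemma succ_ex x : inC x -> x = r \/ exists xp, immpred x xp.
Proof.
  intros HxC. destruct (classic (x = r)) as [E|E]; [left; auto|right].
  apply NNPP; intro Hno. apply (no_down_limit x HxC E Hno).
Qed.

Lemma le1_att x z : inC z -> immpred z x -> forall y1 y2, at_ y1 x -> at_ y2 x -> y1 = y2.
Proof.
  intros HzC Hzx y1 y2 H1 H2. apply NNPP; intro Hne. apply HF3.
  apply (F3_onto x z y1 y2 HzC Hzx H1 H2 Hne). apply succ_ex. apply (at_C _ _ H1).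
Qed.

Lemma ex_att x z : ptlt m z -> immpred z x -> exists y, at_ y x.
Proof.
  intros Hmz Hzx. apply NNPP; intro Hn.
  assert (HzC : inC z) by apply Hmz.
  assert (HxC : inC x) by (eapply inC_up; [exact HzC|apply Hzx]).
  destruct (classic (exists y zy, at_ y zy /\ ptle x zy)) as [Hex|Hno].
  2:{ apply HF1. apply (F1_onto x z Hmz Hzx). intros y zy H1 H2. apply Hno. exists y, zy. auto. }
  set (W := fun w => inC w /\ ptle x w /\ exists y, at_ y w).
  destruct (wo_least W) as [w [[HwC [Hxw [yw Hyw]]] Hleast]].
  { intros w Hw. apply Hw. }
  { destruct Hex as [y [zy [H1 H2]]]. exists zy. split; [apply (at_C _ _ H1)|split; eauto]. }
  assert (Hxw' : ptlt x w) by (split; auto; intros ->; apply Hn; exists yw; auto).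
  assert (Hband : forall y zy, at_ y zy -> ptle x zy -> ptlt zy w -> False).
  { intros y zy H1 H2 H3. apply (ptlt_not_ge _ _ H3). apply Hleast. split; [apply (at_C _ _ H1)|split; eauto]. }
  destruct (classic (exists z', ptle m z' /\ immpred z' w)) as [[z' [Hz'1 Hz'2]]|Hnz].
  - apply HF2. apply (F2_onto x z w z' yw Hmz Hzx Hxw' Hz'1 Hz'2 Hyw Hband).
  - assert (Hup : up_limit m w).
    { split; auto. split; auto. intros E. subst w. apply (ptlt_not_ge _ _ Hxw'). auto. }
    destruct (ul_stab w Hup gens) as [z0 [Hz0 Hs]].
    assert (HBx : B w x) by (split; auto).
    destruct (B_max w z0 x Hz0 HBx) as [z2 [Hz2 [K1 K2]]].
    apply (up_core w Hup z2 Hz2).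
    + intros v g Hv Hzv Hgg.
      rewrite (Hs v Hv (ptle_trans _ _ _ K1 Hzv) g Hgg), (Hs z2 Hz2 K1 g Hgg). tauto.
    + intros y y' zy zy' Hy _ Hzy Hz2zy _ _. exfalso.
      apply (Hband y zy Hy (ptle_trans _ _ _ K2 Hz2zy) (proj2 Hzy)).
    + left. intros y zy Hy Hzy Hz2zy. apply (Hband y zy Hy (ptle_trans _ _ _ K2 Hz2zy) (proj2 Hzy)).
Qed.

Lemma main_conj :
  (forall x, up_limit m x ->
     at_least_two (fun z => immpred z x) /\
     at_most (Nat.pow 2 (length gens)) (fun z => immpred z x)) /\
  (forall x, ~ down_limit m r x) /\
  infinite_well_order_up m /\
  (forall x, immpred m x -> at_most 2 (fun z => immpred z x)) /\
  (forall x, ptlt m x -> ~ immpred m x -> ~ up_limit m x ->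
     (exists! z, immpred z x /\ ptlt m z) /\
     (exists! z, immpred z x /\ ~ ptlt m z)).
Proof.
  split; [|split; [|split; [|split]]].
  - intros x Hx. split; [apply ul_two; auto|apply ul_atmost; auto].
  - intros x [H1 [H2 H3]]. apply (no_down_limit x H1 H2 H3).
  - split; [|split].
    + intros; apply (chain_base m); auto.
    + apply wo_least.
    + apply C_infinite; auto.
  - intros x Hmx.
    set (pick := match excluded_middle_informative (exists y, at_ y x) with
      | left H => proj1_sig (constructive_indefinite_description _ H) | right _ => m end).
    exists [m; pick]. split; [simpl; lia|].
    intros z Hz. destruct (C_or_att z) as [HC|HA].
    + left. destruct (classic (m = z)) as [E|E]; auto. exfalso.
      apply (proj2 Hmx). exists z. split; [split; auto|exact (proj1 Hz)].
    + right; left. assert (Hzx : at_ z x) by (split; auto).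
      unfold pick. destruct (excluded_middle_informative _) as [K|K]; [|exfalso; apply K; exists z; auto].
      destruct (constructive_indefinite_description _ K) as [y Hy]. simpl.
      apply (le1_att x m m_inC Hmx y z Hy Hzx).
  - intros x Hmx Hnim Hnup.
    assert (Hz : exists z, ptle m z /\ immpred z x).
    { apply NNPP; intro H. apply Hnup. split; auto. }
    destruct Hz as [z [Hmz Hzx]].
    assert (Hmz' : ptlt m z) by (split; auto; intros <-; contradiction).
    split.
    + exists z. split; [split; auto|]. intros z' [Hz'x Hmz'2].
      destruct (C_lt_or_ge z z' Hmz (proj1 Hmz'2)) as [K|K].
      * exfalso. apply (proj2 Hzx). exists z'. split; auto. apply Hz'x.
      * destruct (classic (z' = z)) as [E|E]; auto. exfalso. apply (proj2 Hz'x). exists z.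
        split; [split; auto|apply Hzx].
    + destruct (ex_att x z Hmz' Hzx) as [y Hy]. exists y. split.
      * split; [apply Hy|]. intros [K _]. apply (att_notC y (at_att _ _ Hy)). exact K.
      * intros z' [Hz'x Hz'm]. destruct (C_or_att z') as [HC|HA].
        -- exfalso. destruct (classic (m = z')) as [E|E].
           ++ subst z'. contradiction.
           ++ apply Hz'm. split; auto.
        -- apply (le1_att x z Hmz Hzx y z' Hy (conj HA Hz'x)).
Qed.
End Final.

End Setting.


Theorem theorem3p19 (n : nat) (A : biHeyting) (r m : pt A) :
  0 < n ->
  n_generated n A ->
  infinite_alg A ->
  subdirectly_irreducible A ->
  validates_LFC A ->
  greatest_pt r ->
  minimal_pt m ->
  (forall x, ptlt m x \/ minimal_pt x) ->
  (forall y, minimal_pt y -> y <> m ->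
     exists z, immpred y z /\ ptlt m z /\ forall w, immpred y w -> w = z) ->
  (* (i) *)
  (forall x, up_limit m x ->
     at_least_two (fun z => immpred z x) /\
     at_most (Nat.pow 2 n) (fun z => immpred z x)) /\
  (* (ii) *)
  (forall x, ~ down_limit m r x) /\
  (* (iii) *)
  infinite_well_order_up m /\
  (* (iv) *)
  (forall x, immpred m x -> at_most 2 (fun z => immpred z x)) /\
  (* (v) *)
  (forall x, ptlt m x -> ~ immpred m x -> ~ up_limit m x ->
     (exists! z, immpred z x /\ ptlt m z) /\
     (exists! z, immpred z x /\ ~ ptlt m z)).
Proof.
  intros Hn [gens [Hlen Hgen]] Hinf _ [HLC [_ [HF1 [HF2 HF3]]]] Hr Hm Hcov Hatt.
  pose proof (main_conj gens Hgen r m HLC Hr Hm Hcov Hatt HF1 HF2 HF3 Hinf) as H.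
  rewrite Hlen in H. exact H.
Qed.
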